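(* Let $S_\lambda\in\mathcal B(\ell^2(V))$ be a $2$-isometric weighted shift on a rooted directed tree $\mathcal T=(V,E)$ with root $\omega$ and weights $\{\lambda_v\}_{v\in V^\circ}$, and suppose there is $\{\alpha_v\}_{v\in V}\subseteq\mathbb R_+$ with $\|S_\lambda e_u\|=\alpha_{\mathrm{par}(u)}$ for all $u\in V^\circ$. Then $\mathcal T$ is leafless and $$S_\lambda\cong S_{[x]}\oplus\bigoplus_{k=1}^\infty\big(S_{[\xi_k(x)]}\big)^{\oplus j_k},$$ where $x=\|S_\lambda e_\omega\|$ and $j_k=\mathfrak j^{\mathcal T}_k$ for $k\in\mathbb N$. Moreover, if all weights are nonzero, then $j_k\le\aleph_0$ for all $k$.
   Context: A directed tree $\mathcal T=(V,E)$ is a connected directed graph without circuits with each vertex having at most one parent; $\omega$ denotes the root, $V^\circ=V\setminus\{\omega\}$, $\mathrm{par}(v)$ is the parent, $\mathrm{Chi}(u)$ the set of children, $\deg u=\#\mathrm{Chi}(u)$, $\mathrm{Chi}^0(\omega)=\{\omega\}$, $\mathrm{Chi}^{n}(\omega)=\bigcup_{u\in\mathrm{Chi}^{n-1}(\omega)}\mathrm{Chi}(u)$. The weighted shift is $(S_\lambda f)(v)=\lambda_vf(\mathrm{par}(v))$, $(S_\lambda f)(\omega)=0$; $e_u$ is the indicator of $\{u\}$. $2$-isometry: $I-2T^*T+T^{*2}T^2=0$. $\xi_n(x)=\sqrt{\frac{1+(n+1)(x^2-1)}{1+n(x^2-1)}}$. For $x\ge1$, $S_{[x]}$ is the unilateral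 weighted shift in $\ell^2(\mathbb Z_+)$ with weights $\{\xi_n(x)\}_{n\ge0}$. For a leafless tree, the $k$th generation branching degree is $\mathfrak j^{\mathcal T}_k=\sum_{u\in\mathrm{Chi}^{k-1}(\omega)}(\deg u-1)$. $A^{\oplus\mathfrak n}$ is the $\mathfrak n$-fold orthogonal sum of copies of $A$ ($A^{\oplus0}=0$ on the zero space). *)

(* Defs.v *)
From Stdlib Require Import Reals List ClassicalEpsilon.
Open Scope R_scope.
Set Implicit Arguments.

Definition Cx : Type := (R * R)%type.
Definition C0 : Cx := (0, 0).
Definition C1 : Cx := (1, 0).
Definition RtoC (r : R) : Cx := (r, 0).
Definition Cadd (z w : Cx) : Cx := (fst z + fst w, snd z + snd w).
Definition Cmul (z w : Cx) : Cx :=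
  (fst z * fst w - snd z * snd w, fst z * snd w + snd z * fst w).
Definition Cnorm2 (z : Cx) : R := fst z * fst z + snd z * snd z.

Definition fsum {I : Type} (g : I -> R) (l : list I) : R := fold_right Rplus 0 (map g l).
(* [has_sum g s] : the (unordered) sum of the family g equals s, i.e. s is the
   supremum of all finite partial sums (for nonnegative g). *)
Definition has_sum {I : Type} (g : I -> R) (s : R) : Prop :=
  is_lub (fun r => exists l : list I, NoDup l /\ r = fsum g l) s.

Definition nsq {I : Type} (f : I -> Cx) (s : R) : Prop := has_sum (fun i => Cnorm2 (f i)) s.
Definition l2 {I : Type} (f : I -> Cx) : Prop := exists s, nsq f s.

Definition bounded_op {I : Type} (T : (I -> Cx) -> (I -> Cx)) : Prop :=
  (forall f, l2 f -> l2 (T f)) /\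
  exists M : R, forall f s t, l2 f -> nsq f s -> nsq (T f) t -> t <= M * s.

(* 2-isometry: I - 2T*T + T*^2T^2 = 0, i.e. ||f||^2 - 2||Tf||^2 + ||T^2 f||^2 = 0 *)
Definition two_isometry {I : Type} (T : (I -> Cx) -> (I -> Cx)) : Prop :=
  forall f a b c, l2 f -> nsq f a -> nsq (T f) b -> nsq (T (T f)) c ->
    a - 2 * b + c = 0.

Definition unitarily_equiv {A B : Type} (S : (A -> Cx) -> (A -> Cx))
  (T : (B -> Cx) -> (B -> Cx)) : Prop :=
  exists U : (A -> Cx) -> (B -> Cx),
    (forall f, l2 f -> l2 (U f)) /\
    (forall f g, l2 f -> l2 g ->
        forall b, U (fun a => Cadd (f a) (g a)) b = Cadd (U f b) (U g b)) /\
    (forall (z : Cx) f, l2 f -> forall b, U (fun a => Cmul z (f a)) b = Cmul z (U f b)) /\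
    (forall f s, l2 f -> (nsq f s <-> nsq (U f) s)) /\
    (forall g, l2 g -> exists f, l2 f /\ forall b, U f b = g b) /\
    (forall f, l2 f -> forall b, U (S f) b = T (U f) b).

(* a rooted directed tree on V is given by its root and the parent map
   (None exactly at the root); every vertex reaches the root. *)
Definition parO {V : Type} (par : V -> option V) (o : option V) : option V :=
  match o with Some v => par v | None => None end.

Definition gen {V : Type} (root : V) (par : V -> option V) (n : nat) (u : V) : Prop :=
  Nat.iter n (parO par) (Some u) = Some root.

Definition is_rooted_tree {V : Type} (root : V) (par : V -> option V) : Prop :=
  par root = None /\
  (forall v, par v = None -> v = root) /\
  (forall v, exists n, gen root par n v).

Definition leafless {V : Type} (par : V -> option V) : Prop :=
  forall u, exists v, par v = Some u.

Definition wshift {V : Type} (par : V -> option V) (lam : V -> Cx) (f : V -> Cx) : V -> Cx :=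
  fun v => match par v with None => C0 | Some p => Cmul (lam v) (f p) end.

Definition e_ {V : Type} (u : V) : V -> Cx :=
  fun v => if excluded_middle_informative (v = u) then C1 else C0.

Definition xi (n : nat) (x : R) : R :=
  sqrt ((1 + (INR n + 1) * (x ^ 2 - 1)) / (1 + INR n * (x ^ 2 - 1))).

Definition uwshift (w : nat -> R) (f : nat -> Cx) : nat -> Cx :=
  fun n => match n with O => C0 | S m => Cmul (RtoC (w m)) (f m) end.

(* Multiplicity set for k = kk+1:
   disjoint union over u in Chi^kk(root) of Chi(u) minus one chosen child c u;
   its cardinality is j_{kk+1} = sum_{u in Chi^kk} (deg u - 1). *)
Definition Jmult {V : Type} (root : V) (par : V -> option V) (c : V -> V) (kk : nat) : Type :=
  { p : V * V | gen root par kk (fst p) /\ par (snd p) = Some (fst p) /\ snd p <> c (fst p) }.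

(* index set of S_[x] (+) (+)_{k>=1} (S_[xi_k(x)])^{(+) J k}; summand kk <-> k = kk+1 *)
Definition Idx (J : nat -> Type) : Type := (nat + { kk : nat & (J kk * nat)%type })%type.

Definition model_op (x : R) (J : nat -> Type) (g : Idx J -> Cx) : Idx J -> Cx :=
  fun i => match i with
  | inl n => uwshift (fun m => xi m x) (fun m => g (inl m)) n
  | inr (existT _ kk (j, n)) =>
      uwshift (fun m => xi m (xi (S kk) x)) (fun m => g (inr (existT _ kk (j, m)))) n
  end.
Arguments model_op x J g i : clear implicits.
Arguments Idx J : clear implicits.

(* Main.v *)
Require Import Defs.
From Stdlib Require Import Reals.
From Stdlib Require Import Lra Lia List Classical ClassicalEpsilon FunctionalExtensionality ProofIrrelevance Cantor.
Open Scope R_scope.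
Import ListNotations.

Definition edec {T : Type} (a b : T) : {a = b} + {a <> b} := excluded_middle_informative (a = b).

Lemma fsum_nil {I} (g : I -> R) : fsum g [] = 0.
Proof. reflexivity. Qed.
Lemma fsum_cons {I} (g : I -> R) a l : fsum g (a :: l) = g a + fsum g l.
Proof. reflexivity. Qed.
Lemma fsum_app {I} (g : I -> R) l1 l2 : fsum g (l1 ++ l2) = fsum g l1 + fsum g l2.
Proof. induction l1; unfold fsum in *; simpl in *; [lra|rewrite IHl1; lra]. Qed.
Lemma fsum_plus {I} (g h : I -> R) l : fsum (fun i => g i + h i) l = fsum g l + fsum h l.
Proof. induction l; unfold fsum in *; simpl; [lra|]. rewrite IHl; lra. Qed.
Lemma fsum_scal {I} (g : I -> R) c l : fsum (fun i => c * g i) l = c * fsum g l.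
Proof. induction l; unfold fsum in *; simpl; [lra|]. rewrite IHl; lra. Qed.
Lemma fsum_ext {I} (g h : I -> R) l : (forall i, In i l -> g i = h i) -> fsum g l = fsum h l.
Proof. induction l; intros H; unfold fsum in *; simpl; auto. rewrite H by (left; auto). rewrite IHl; auto. intros; apply H; right; auto. Qed.
Lemma fsum_le {I} (g h : I -> R) l : (forall i, g i <= h i) -> fsum g l <= fsum h l.
Proof. induction l; intros H; unfold fsum in *; simpl; [lra|]. specialize (IHl H). specialize (H a). lra. Qed.
Lemma fsum_nonneg {I} (g : I -> R) l : (forall i, 0 <= g i) -> 0 <= fsum g l.
Proof. induction l; intros H; unfold fsum in *; simpl; [lra|]. specialize (IHl H). specialize (H a). lra. Qed.
Lemma fsum_map {I J} (g : I -> R) (f : J -> I) l : fsum g (map f l) = fsum (fun j => g (f j)) l.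
Proof. unfold fsum. rewrite map_map. reflexivity. Qed.

Lemma fsum_remove {I} (g : I -> R) a l : NoDup l -> In a l -> fsum g l = g a + fsum g (remove edec a l).
Proof.
  induction l; intros Hn Hi; simpl in *. contradiction.
  inversion Hn; subst. destruct (edec a a0) as [e|ne].
  - subst. rewrite fsum_cons. f_equal. rewrite notin_remove; auto.
  - destruct Hi as [Hi|Hi]; [congruence|]. rewrite fsum_cons. rewrite IHl; auto.
    rewrite fsum_cons. lra.
Qed.


Lemma NoDup_remove' {I} (a : I) l : NoDup l -> NoDup (remove edec a l).
Proof.
  induction l; intros H; simpl; auto. inversion H; subst.
  destruct (edec a a0); auto. constructor; auto. intro Hi. apply H2.
  eapply in_remove; eauto.
Qed.

Lemma fsum_incl {I} (g : I -> R) l1 l : (forall i, 0 <= g i) -> NoDup l1 -> (forall x, In x l1 -> In x l) -> fsum g l1 <= fsum g l.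
Proof.
  intros Hg. revert l1. induction l; intros l1 Hn Hi.
  - destruct l1. simpl; lra. exfalso; apply (Hi i); left; auto.
  - rewrite fsum_cons. destruct (in_dec edec a l1) as [Ha|Ha].
    + rewrite (fsum_remove g a l1) by auto. assert (fsum g (remove edec a l1) <= fsum g l); [|lra].
      apply IHl. apply NoDup_remove'; auto.
      intros x Hx. apply in_remove in Hx. destruct Hx as [Hx Hne]. destruct (Hi x Hx); auto. congruence.
    + specialize (Hg a). assert (fsum g l1 <= fsum g l); [|lra]. apply IHl; auto.
      intros x Hx. destruct (Hi x Hx); auto. subst; contradiction.
Qed.

Lemma has_sum_unique {I} (g : I -> R) s t : has_sum g s -> has_sum g t -> s = t.
Proof. apply is_lub_u. Qed.

Lemma has_sum_ub {I} (g : I -> R) s l : has_sum g s -> NoDup l -> fsum g l <= s.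
Proof. intros [H _] Hl. apply H. exists l; auto. Qed.

Lemma has_sum_least {I} (g : I -> R) s b : has_sum g s -> (forall l, NoDup l -> fsum g l <= b) -> s <= b.
Proof. intros [_ H] Hb. apply H. intros r [l [Hl ->]]. auto. Qed.

Lemma has_sum_intro {I} (g : I -> R) s :
  (forall l, NoDup l -> fsum g l <= s) -> (forall b, (forall l, NoDup l -> fsum g l <= b) -> s <= b) -> has_sum g s.
Proof. intros H1 H2. split. intros r [l [Hl ->]]; auto. intros b Hb. apply H2. intros l Hl. apply Hb. exists l; auto. Qed.

Lemma has_sum_exists {I} (g : I -> R) M : (forall l, NoDup l -> fsum g l <= M) -> exists s, has_sum g s.
Proof.
  intros H. destruct (completeness (fun r => exists l : list I, NoDup l /\ r = fsum g l)) as [m Hm].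
  - exists M. intros r [l [Hl ->]]; auto.
  - exists 0. exists []. split; [constructor|reflexivity].
  - exists m; exact Hm.
Qed.

Lemma has_sum_nonneg {I} (g : I -> R) s : has_sum g s -> 0 <= s.
Proof. intros H. apply (has_sum_ub g s []) in H; [|constructor]. simpl in H. exact H. Qed.

Lemma has_sum_eps {I} (g : I -> R) s e : has_sum g s -> 0 < e -> exists l, NoDup l /\ s - e < fsum g l.
Proof.
  intros H He. apply NNPP. intro Hn. assert (s <= s - e); [|lra].
  apply (has_sum_least g s (s - e) H). intros l Hl. apply Rnot_lt_le. intro Hc. apply Hn. exists l; auto.
Qed.

Lemma has_sum_dom {I J} (g : I -> R) (h : J -> R) s :
  (forall l, NoDup l -> exists l', NoDup l' /\ fsum g l <= fsum h l') ->
  (forall l, NoDup l -> exists l', NoDup l' /\ fsum h l <= fsum g l') ->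
  has_sum g s -> has_sum h s.
Proof.
  intros H1 H2 Hg. apply has_sum_intro.
  - intros l Hl. destruct (H2 l Hl) as [l' [Hl' Hle]]. pose proof (has_sum_ub g s l' Hg Hl'). lra.
  - intros b Hb. apply (has_sum_least g s b Hg). intros l Hl. destruct (H1 l Hl) as [l' [Hl' Hle]].
    specialize (Hb l' Hl'). lra.
Qed.

Lemma has_sum_ext {I} (g h : I -> R) s : (forall i, g i = h i) -> has_sum g s -> has_sum h s.
Proof. intros H. replace h with g; auto. apply functional_extensionality; auto. Qed.

Lemma has_sum_zero {I} : has_sum (fun _ : I => 0) 0.
Proof.
  apply has_sum_intro. intros l _. induction l; [rewrite fsum_nil; lra|]. rewrite fsum_cons; lra.
  intros b Hb. specialize (Hb [] (NoDup_nil _)). rewrite fsum_nil in Hb. lra.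
Qed.

Lemma has_sum_zero' {I} (g : I -> R) : (forall i, g i = 0) -> has_sum g 0.
Proof. intros H. eapply has_sum_ext; [|apply has_sum_zero]. intros; rewrite H; auto. Qed.

Lemma has_sum_zero_inv {I} (g : I -> R) : (forall i, 0 <= g i) -> has_sum g 0 -> forall i, g i = 0.
Proof.
  intros Hg H i. pose proof (has_sum_ub g 0 [i] H). assert (NoDup [i]) by (constructor; [auto|constructor]).
  specialize (H0 H1). unfold fsum in H0; simpl in H0. specialize (Hg i). lra.
Qed.

Lemma has_sum_le_exists {I} (g h : I -> R) t : (forall i, g i <= h i) -> has_sum h t -> exists s, has_sum g s /\ s <= t.
Proof.
  intros Hle Ht. destruct (has_sum_exists g t) as [s Hs].
  - intros l Hl. pose proof (fsum_le g h l Hle). pose proof (has_sum_ub h t l Ht Hl). lra.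
  - exists s; split; auto. apply (has_sum_least g s t Hs). intros l Hl.
    pose proof (fsum_le g h l Hle). pose proof (has_sum_ub h t l Ht Hl). lra.
Qed.

Lemma has_sum_le {I} (g h : I -> R) s t : (forall i, g i <= h i) -> has_sum g s -> has_sum h t -> s <= t.
Proof.
  intros Hle Hs Ht. apply (has_sum_least g s t Hs). intros l Hl.
  pose proof (fsum_le g h l Hle). pose proof (has_sum_ub h t l Ht Hl). lra.
Qed.

Lemma has_sum_scal {I} (g : I -> R) c s : 0 <= c -> has_sum g s -> has_sum (fun i => c * g i) (c * s).
Proof.
  intros Hc Hs. destruct (Req_dec c 0) as [->|Hc0].
  - eapply has_sum_ext; [|replace (0 * s) with 0 by ring; apply has_sum_zero]. intros; simpl; ring.
  - apply has_sum_intro.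
    + intros l Hl. rewrite fsum_scal. apply Rmult_le_compat_l; auto. apply has_sum_ub; auto.
    + intros b Hb. assert (s <= b / c).
      { apply (has_sum_least g s); auto. intros l Hl. specialize (Hb l Hl). rewrite fsum_scal in Hb.
        apply (Rmult_le_reg_l c); [lra|]. field_simplify; auto. }
      apply (Rmult_le_compat_l c) in H; [|lra]. field_simplify in H; auto.
Qed.

Lemma has_sum_nodup {I} (g : I -> R) l : (forall i, 0 <= g i) -> fsum g l <= fsum g (nodup edec l) -> True.
Proof. auto. Qed.

Lemma has_sum_plus {I} (g h : I -> R) s t : (forall i, 0 <= g i) -> (forall i, 0 <= h i) ->
  has_sum g s -> has_sum h t -> has_sum (fun i => g i + h i) (s + t).
Proof.
  intros Hg Hh Hs Ht. apply has_sum_intro.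
  - intros l Hl. rewrite fsum_plus. pose proof (has_sum_ub g s l Hs Hl). pose proof (has_sum_ub h t l Ht Hl). lra.
  - intros b Hb. apply Rnot_lt_le. intro Hlt. set (e := (s + t - b) / 2).
    assert (He : 0 < e) by (unfold e; lra).
    destruct (has_sum_eps g s e Hs He) as [l1 [Hl1 H1]].
    destruct (has_sum_eps h t e Ht He) as [l2 [Hl2 H2]].
    set (l := nodup edec (l1 ++ l2)).
    assert (Hl : NoDup l) by apply NoDup_nodup.
    specialize (Hb l Hl). rewrite fsum_plus in Hb.
    assert (fsum g l1 <= fsum g l). { apply fsum_incl; auto. intros x Hx. apply nodup_In. apply in_or_app; auto. }
    assert (fsum h l2 <= fsum h l). { apply fsum_incl; auto. intros x Hx. apply nodup_In. apply in_or_app; auto. }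
    unfold e in *. lra.
Qed.


Definition nzb (r : R) : bool := if Req_EM_T r 0 then false else true.

Lemma fsum_filter_nz {I} (g : I -> R) l : fsum g (filter (fun i => nzb (g i)) l) = fsum g l.
Proof.
  induction l; [reflexivity|]. simpl. unfold nzb at 1. destruct (Req_EM_T (g a) 0).
  - rewrite fsum_cons, e, IHl; lra.
  - rewrite !fsum_cons, IHl; lra.
Qed.

Lemma reindex_doms {I J} (g : I -> R) (h : J -> R) (phi : J -> I) :
  (forall j, h j <> 0 -> g (phi j) = h j) ->
  (forall j j', h j <> 0 -> h j' <> 0 -> phi j = phi j' -> j = j') ->
  (forall i, g i <> 0 -> exists j, h j <> 0 /\ phi j = i) ->
  (forall l, NoDup l -> exists l', NoDup l' /\ fsum g l <= fsum h l') /\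
  (forall l, NoDup l -> exists l', NoDup l' /\ fsum h l <= fsum g l').
Proof.
  intros H1 H2 H3. split.
  - intros l Hl. destruct (classic (inhabited J)) as [[j0]|Hne].
    + set (psi := fun i => epsilon (inhabits j0) (fun j => h j <> 0 /\ phi j = i)).
      assert (Hpsi : forall i, g i <> 0 -> h (psi i) <> 0 /\ phi (psi i) = i).
      { intros i Hi. unfold psi. apply (epsilon_spec (inhabits j0) (fun j => h j <> 0 /\ phi j = i)). auto. }
      set (lf := filter (fun i => nzb (g i)) l).
      assert (Hlf : forall i, In i lf -> g i <> 0).
      { intros i Hi. apply filter_In in Hi. destruct Hi as [_ Hi]. unfold nzb in Hi. destruct (Req_EM_T (g i) 0); congruence. }
      exists (map psi lf). split.
      * apply NoDup_map_NoDup_ForallPairs. intros a b Ha Hb Heq.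
        destruct (Hpsi a (Hlf a Ha)) as [_ Ea]. destruct (Hpsi b (Hlf b Hb)) as [_ Eb]. congruence.
        apply NoDup_filter; auto.
      * rewrite <- fsum_filter_nz. fold lf. rewrite fsum_map. right. apply fsum_ext.
        intros i Hi. destruct (Hpsi i (Hlf i Hi)) as [A B]. rewrite <- (H1 _ A). rewrite B; auto.
    + exists []. split; [constructor|]. rewrite fsum_nil. rewrite <- fsum_filter_nz.
      destruct (filter (fun i => nzb (g i)) l) eqn:E; [rewrite fsum_nil; lra|].
      exfalso. assert (In i (filter (fun i => nzb (g i)) l)) by (rewrite E; left; auto).
      apply filter_In in H. destruct H as [_ H]. unfold nzb in H. destruct (Req_EM_T (g i) 0); [congruence|].
      destruct (H3 i n) as [j _]. apply Hne; constructor; exact j.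
  - intros l Hl. set (lf := filter (fun j => nzb (h j)) l).
    assert (Hlf : forall j, In j lf -> h j <> 0).
    { intros i Hi. apply filter_In in Hi. destruct Hi as [_ Hi]. unfold nzb in Hi. destruct (Req_EM_T (h i) 0); congruence. }
    exists (map phi lf). split.
    + apply NoDup_map_NoDup_ForallPairs. intros a b Ha Hb Heq. apply H2; auto. apply NoDup_filter; auto.
    + rewrite <- fsum_filter_nz. fold lf. rewrite fsum_map. right. apply fsum_ext. intros j Hj. rewrite H1; auto.
Qed.

Lemma has_sum_reindex {I J} (g : I -> R) (h : J -> R) (phi : J -> I) s :
  (forall j, h j <> 0 -> g (phi j) = h j) ->
  (forall j j', h j <> 0 -> h j' <> 0 -> phi j = phi j' -> j = j') ->
  (forall i, g i <> 0 -> exists j, h j <> 0 /\ phi j = i) ->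
  (has_sum g s <-> has_sum h s).
Proof.
  intros H1 H2 H3. destruct (reindex_doms g h phi H1 H2 H3) as [D1 D2].
  split; apply has_sum_dom; auto.
Qed.

Definition blk {I K} (p : I -> K) (g : I -> R) (k : K) : I -> R :=
  fun i => if edec (p i) k then g i else 0.

Lemma fsum_blk_pt {I K} (p : I -> K) (g : I -> R) i lk :
  NoDup lk -> In (p i) lk -> fsum (fun k => blk p g k i) lk = g i.
Proof.
  induction lk; intros Hn Hi; [contradiction|]. inversion Hn; subst. rewrite fsum_cons. unfold blk at 1.
  destruct (edec (p i) a).
  - subst. assert (fsum (fun k => blk p g k i) lk = 0); [|lra].
    transitivity (fsum (fun _ => 0) lk). apply fsum_ext. intros k Hk. unfold blk. destruct (edec (p i) k); auto.
    subst; contradiction. clear. induction lk; auto. rewrite fsum_cons, IHlk; lra.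
  - destruct Hi as [Hi|Hi]; [congruence|]. rewrite IHlk; auto. lra.
Qed.

Lemma fsum_blk {I K} (p : I -> K) (g : I -> R) l lk :
  NoDup lk -> (forall i, In i l -> In (p i) lk) -> fsum g l = fsum (fun k => fsum (blk p g k) l) lk.
Proof.
  intros Hn. induction l; intros Hi.
  - transitivity (fsum (fun _ => 0) lk). clear. induction lk; auto. rewrite fsum_cons, <- IHlk; lra.
    apply fsum_ext; auto.
  - rewrite fsum_cons. transitivity (fsum (fun k => blk p g k a + fsum (blk p g k) l) lk).
    rewrite fsum_plus. rewrite fsum_blk_pt; auto. rewrite IHl; auto. intros; apply Hi; right; auto.
    apply Hi; left; auto. apply fsum_ext; intros; rewrite fsum_cons; auto.
Qed.

Lemma fsum_filter_blk {I K} (p : I -> K) (g : I -> R) k l :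
  fsum g (filter (fun i => if edec (p i) k then true else false) l) = fsum (blk p g k) l.
Proof.
  induction l; auto. simpl. rewrite (fsum_cons (blk p g k)). unfold blk at 1. destruct (edec (p a) k); rewrite ?fsum_cons, IHl; lra.
Qed.

Lemma has_sum_blk_nonneg {I K} (p : I -> K) (g : I -> R) k : (forall i, 0 <= g i) -> forall i, 0 <= blk p g k i.
Proof. intros H i; unfold blk; destruct edec; auto; lra. Qed.

Lemma part_eps {I K} (p : I -> K) (g : I -> R) (s : K -> R) :
  (forall k, has_sum (blk p g k) (s k)) ->
  forall lk, NoDup lk -> forall e, 0 < e -> exists l, NoDup l /\ (forall i, In i l -> In (p i) lk) /\ fsum s lk - e < fsum g l.
Proof.
  intros Hs lk. induction lk; intros Hn e He.
  - exists []. split; [constructor|]. split. intros; contradiction. rewrite !fsum_nil; lra.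
  - inversion Hn; subst. destruct (IHlk H2 (e/2)) as [l' [Hl' [Hin' Hs']]]; [lra|].
    destruct (has_sum_eps _ _ (e/2) (Hs a)) as [la [Hla Hsa]]; [lra|].
    set (lf := filter (fun i => if edec (p i) a then true else false) la).
    exists (lf ++ l'). split; [|split].
    + apply NoDup_app; auto. apply NoDup_filter; auto.
      intros x Hx Hx'. apply filter_In in Hx. destruct Hx as [_ Hx]. destruct (edec (p x) a); [|congruence].
      apply Hin' in Hx'. subst. contradiction.
    + intros i Hi. apply in_app_or in Hi. destruct Hi as [Hi|Hi]. apply filter_In in Hi. destruct Hi as [_ Hi].
      destruct (edec (p i) a); [left; auto|congruence]. right; auto.
    + rewrite fsum_app, fsum_cons. unfold lf. rewrite fsum_filter_blk. lra.
Qed.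

Lemma fsum_le_in {I} (g h : I -> R) l : (forall i, In i l -> g i <= h i) -> fsum g l <= fsum h l.
Proof. induction l; intros H; [rewrite !fsum_nil; lra|]. rewrite !fsum_cons.
  assert (g a <= h a) by (apply H; left; auto). assert (fsum g l <= fsum h l) by (apply IHl; intros; apply H; right; auto). lra. Qed.

Lemma has_sum_partition {I K} (p : I -> K) (g : I -> R) (s : K -> R) S :
  (forall i, 0 <= g i) -> (forall k, has_sum (blk p g k) (s k)) ->
  (has_sum g S <-> has_sum s S).
Proof.
  intros Hg Hs.
  assert (A : forall S, has_sum g S -> forall lk, NoDup lk -> fsum s lk <= S).
  { intros S0 HS lk Hlk. apply Rnot_lt_le; intro Hc. destruct (part_eps p g s Hs lk Hlk (fsum s lk - S0)) as [l [Hl [_ Hl2]]]; [lra|].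
    pose proof (has_sum_ub g S0 l HS Hl). lra. }
  assert (B : forall T, has_sum s T -> forall l, NoDup l -> fsum g l <= T).
  { intros T HT l Hl. set (lk := nodup edec (map p l)). rewrite (fsum_blk p g l lk).
    - apply Rle_trans with (fsum s lk). apply fsum_le_in. intros k _. apply has_sum_ub; auto.
      apply has_sum_ub; auto. apply NoDup_nodup.
    - apply NoDup_nodup.
    - intros i Hi. apply nodup_In. apply in_map; auto. }
  split.
  - intros HS. destruct (has_sum_exists s S (A S HS)) as [T HT].
    assert (T <= S) by (apply (has_sum_least s T S HT); apply A; auto).
    assert (S <= T) by (apply (has_sum_least g S T HS); apply B; auto).
    replace S with T by lra. auto.
  - intros HT. destruct (has_sum_exists g S (B S HT)) as [S' HS'].
    assert (S' <= S) by (apply (has_sum_least g S' S HS'); apply B; auto).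
    assert (S <= S') by (apply (has_sum_least s S S' HT); apply A; auto).
    replace S with S' by lra. auto.
Qed.

Lemma has_sum_single {I} (g : I -> R) a : (forall i, i <> a -> g i = 0) -> 0 <= g a -> has_sum g (g a).
Proof.
  intros H Ha. apply has_sum_intro.
  - intros l Hl. rewrite <- fsum_filter_nz. destruct (in_dec edec a l) as [Hi|Hi].
    + rewrite fsum_filter_nz. rewrite (fsum_remove g a l) by auto.
      assert (fsum g (remove edec a l) = 0); [|lra].
      transitivity (fsum (fun _ => 0) (remove edec a l)). apply fsum_ext. intros i Hi'. apply in_remove in Hi'. apply H; tauto.
      clear. induction (remove edec a l); auto. rewrite fsum_cons, IHl0; lra.
    + rewrite fsum_filter_nz. transitivity (fsum (fun _ => 0) l). right; apply fsum_ext. intros i Hi'. apply H. intro; subst; contradiction.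
      clear -Ha. induction l. rewrite fsum_nil; lra. rewrite fsum_cons; lra.
  - intros b Hb. specialize (Hb [a]). assert (NoDup [a]) by (constructor; [auto|constructor]).
    specialize (Hb H0). rewrite fsum_cons, fsum_nil in Hb. lra.
Qed.


Definition pp {I} (a : I -> R) i := Rmax (a i) 0.
Definition nn {I} (a : I -> R) i := Rmax (- a i) 0.
Definition rsum {I} (a : I -> R) (s : R) : Prop :=
  exists p q, has_sum (pp a) p /\ has_sum (nn a) q /\ s = p - q.

Lemma pp_nonneg {I} (a : I -> R) i : 0 <= pp a i. Proof. unfold pp; apply Rmax_r. Qed.
Lemma nn_nonneg {I} (a : I -> R) i : 0 <= nn a i. Proof. unfold nn; apply Rmax_r. Qed.

Lemma rsum_unique {I} (a : I -> R) s t : rsum a s -> rsum a t -> s = t.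
Proof.
  intros [p [q [H1 [H2 ->]]]] [p' [q' [H1' [H2' ->]]]].
  rewrite (has_sum_unique _ _ _ H1 H1'), (has_sum_unique _ _ _ H2 H2'). auto.
Qed.

Lemma rsum_bound {I} (a b : I -> R) B : (forall i, Rabs (a i) <= b i) -> has_sum b B -> exists s, rsum a s.
Proof.
  intros Hb HB. destruct (has_sum_le_exists (pp a) b B) as [p [Hp _]]; auto.
  { intros i; unfold pp. specialize (Hb i). apply Rmax_lub. apply Rle_trans with (Rabs (a i)); auto; apply RRle_abs.
    apply Rle_trans with (Rabs (a i)); auto; apply Rabs_pos. }
  destruct (has_sum_le_exists (nn a) b B) as [q [Hq _]]; auto.
  { intros i; unfold nn. specialize (Hb i). apply Rmax_lub. apply Rle_trans with (Rabs (a i)); auto.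
    rewrite <- Rabs_Ropp; apply RRle_abs. apply Rle_trans with (Rabs (a i)); auto; apply Rabs_pos. }
  exists (p - q). exists p, q. auto.
Qed.

Lemma rsum_of_nonneg {I} (a : I -> R) s : (forall i, 0 <= a i) -> has_sum a s -> rsum a s.
Proof.
  intros Ha Hs. exists s, 0. split; [|split].
  - apply has_sum_ext with a; auto. intros i; unfold pp; rewrite Rmax_left; auto.
  - apply has_sum_zero'. intros i; unfold nn; rewrite Rmax_right; auto. specialize (Ha i); lra.
  - ring.
Qed.

Lemma rsum_to_nonneg {I} (a : I -> R) s : (forall i, 0 <= a i) -> rsum a s -> has_sum a s.
Proof.
  intros Ha [p [q [Hp [Hq ->]]]].
  assert (q = 0). { apply (has_sum_unique (nn a)); auto. apply has_sum_zero'. intros i; unfold nn; rewrite Rmax_right; auto. specialize (Ha i); lra. }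
  subst. replace (p - 0) with p by ring. apply has_sum_ext with (pp a); auto. intros i; unfold pp; rewrite Rmax_left; auto.
Qed.

Lemma rsum_ext {I} (a b : I -> R) s : (forall i, a i = b i) -> rsum a s -> rsum b s.
Proof. intros H. replace b with a; auto. apply functional_extensionality; auto. Qed.

Lemma rsum_add {I} (a b : I -> R) s t : rsum a s -> rsum b t -> rsum (fun i => a i + b i) (s + t).
Proof.
  intros [p [q [Hp [Hq ->]]]] [p' [q' [Hp' [Hq' ->]]]].
  set (c := fun i => a i + b i).
  destruct (has_sum_le_exists (pp c) (fun i => pp a i + pp b i) (p + p')) as [P [HP _]].
  { intros i; unfold pp, c. apply Rmax_lub. pose proof (Rmax_l (a i) 0). pose proof (Rmax_l (b i) 0). lra.
    pose proof (Rmax_r (a i) 0). pose proof (Rmax_r (b i) 0). lra. }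
  { apply has_sum_plus; auto using pp_nonneg. }
  destruct (has_sum_le_exists (nn c) (fun i => nn a i + nn b i) (q + q')) as [N [HN _]].
  { intros i; unfold nn, c. apply Rmax_lub. pose proof (Rmax_l (- a i) 0). pose proof (Rmax_l (- b i) 0). lra.
    pose proof (Rmax_r (- a i) 0). pose proof (Rmax_r (- b i) 0). lra. }
  { apply has_sum_plus; auto using nn_nonneg. }
  exists P, N. split; auto. split; auto.
  assert (E : forall i, pp c i + (nn a i + nn b i) = nn c i + (pp a i + pp b i)).
  { intros i. unfold pp, nn, c. unfold Rmax. repeat destruct Rle_dec; lra. }
  assert (H1 : has_sum (fun i => pp c i + (nn a i + nn b i)) (P + (q + q'))).
  { apply has_sum_plus; auto using pp_nonneg. intros; pose proof (nn_nonneg a i); pose proof (nn_nonneg b i); lra.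
    apply has_sum_plus; auto using nn_nonneg. }
  assert (H2 : has_sum (fun i => nn c i + (pp a i + pp b i)) (N + (p + p'))).
  { apply has_sum_plus; auto using nn_nonneg. intros; pose proof (pp_nonneg a i); pose proof (pp_nonneg b i); lra.
    apply has_sum_plus; auto using pp_nonneg. }
  apply has_sum_ext with (h := fun i => nn c i + (pp a i + pp b i)) in H1; auto.
  pose proof (has_sum_unique _ _ _ H1 H2). lra.
Qed.

Lemma rsum_scal {I} (a : I -> R) s c : rsum a s -> rsum (fun i => c * a i) (c * s).
Proof.
  intros [p [q [Hp [Hq ->]]]]. destruct (Rle_dec 0 c) as [Hc|Hc].
  - exists (c * p), (c * q). split; [|split].
    + apply has_sum_ext with (fun i => c * pp a i). intros i; unfold pp. unfold Rmax; repeat destruct Rle_dec; try nra.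
      apply has_sum_scal; auto.
    + apply has_sum_ext with (fun i => c * nn a i). intros i; unfold nn. unfold Rmax; repeat destruct Rle_dec; try nra.
      apply has_sum_scal; auto.
    + ring.
  - exists (- c * q), (- c * p). split; [|split].
    + apply has_sum_ext with (fun i => - c * nn a i). intros i; unfold pp, nn. unfold Rmax; repeat destruct Rle_dec; try nra.
      apply has_sum_scal; auto; lra.
    + apply has_sum_ext with (fun i => - c * pp a i). intros i; unfold pp, nn. unfold Rmax; repeat destruct Rle_dec; try nra.
      apply has_sum_scal; auto; lra.
    + ring.
Qed.

Lemma rsum_zero {I} (a : I -> R) : (forall i, a i = 0) -> rsum a 0.
Proof. intros H. apply rsum_of_nonneg. intros; rewrite H; lra. apply has_sum_zero'; auto. Qed.

Lemma rsum_single {I} (a : I -> R) x : (forall i, i <> x -> a i = 0) -> rsum a (a x).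
Proof.
  intros H. exists (pp a x), (nn a x). split; [|split].
  - apply has_sum_single. intros i Hi; unfold pp; rewrite H; auto. unfold Rmax; destruct Rle_dec; lra. apply pp_nonneg.
  - apply has_sum_single. intros i Hi; unfold nn; rewrite H; auto. unfold Rmax; destruct Rle_dec; lra. apply nn_nonneg.
  - unfold pp, nn, Rmax; repeat destruct Rle_dec; lra.
Qed.


Definition Cconj (z : Cx) : Cx := (fst z, - snd z).
Definition Copp (z : Cx) : Cx := (- fst z, - snd z).
Definition Csub (z w : Cx) : Cx := Cadd z (Copp w).

Ltac cdes := repeat match goal with
  | z : Cx |- _ => destruct z
  | z : (R * R)%type |- _ => destruct z end.
Ltac csimpl := unfold Csub, Copp, Cconj, Cadd, Cmul, Cnorm2, RtoC, C0, Defs.C1 in *; simpl in *.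

Lemma Cnorm2_nonneg z : 0 <= Cnorm2 z. Proof. unfold Cnorm2; nra. Qed.
Lemma Cnorm2_zero z : Cnorm2 z = 0 -> z = C0.
Proof. destruct z as [a b]; unfold Cnorm2, C0; simpl; intros. f_equal; nra. Qed.
Lemma Cnorm2_C0 : Cnorm2 C0 = 0. Proof. unfold Cnorm2, C0; simpl; ring. Qed.
Lemma Cnorm2_mul z w : Cnorm2 (Cmul z w) = Cnorm2 z * Cnorm2 w.
Proof. destruct z, w; csimpl; ring. Qed.

Definition csum {I} (f : I -> Cx) (z : Cx) : Prop :=
  rsum (fun i => fst (f i)) (fst z) /\ rsum (fun i => snd (f i)) (snd z).

Lemma csum_unique {I} (f : I -> Cx) z w : csum f z -> csum f w -> z = w.
Proof. destruct z, w; intros [A B] [C D]; simpl in *. f_equal; eapply rsum_unique; eauto. Qed.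

Lemma csum_ext {I} (f g : I -> Cx) z : (forall i, f i = g i) -> csum f z -> csum g z.
Proof. intros H. replace g with f; auto. apply functional_extensionality; auto. Qed.

Lemma csum_add {I} (f g : I -> Cx) z w : csum f z -> csum g w -> csum (fun i => Cadd (f i) (g i)) (Cadd z w).
Proof. intros [A B] [C D]. split; simpl. apply (rsum_add _ _ _ _ A C). apply (rsum_add _ _ _ _ B D). Qed.

Lemma csum_scal {I} (f : I -> Cx) z c : csum f z -> csum (fun i => Cmul c (f i)) (Cmul c z).
Proof.
  intros [A B]. destruct c as [c1 c2]; split; simpl.
  - apply rsum_ext with (fun i => c1 * fst (f i) + (- c2) * snd (f i)). intros; ring.
    replace (c1 * fst z - c2 * snd z) with (c1 * fst z + (- c2) * snd z) by ring.
    apply rsum_add; apply rsum_scal; auto.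
  - apply rsum_ext with (fun i => c1 * snd (f i) + c2 * fst (f i)). intros; ring.
    replace (c1 * snd z + c2 * fst z) with (c1 * snd z + c2 * fst z) by ring.
    apply rsum_add; apply rsum_scal; auto.
Qed.

Lemma csum_zero {I} (f : I -> Cx) : (forall i, f i = C0) -> csum f C0.
Proof. intros H; split; apply rsum_zero; intros; rewrite H; reflexivity. Qed.

Lemma csum_single {I} (f : I -> Cx) x : (forall i, i <> x -> f i = C0) -> csum f (f x).
Proof. intros H; split; [apply (rsum_single (fun i => fst (f i)))|apply (rsum_single (fun i => snd (f i)))]; intros; rewrite H; auto. Qed.

Lemma csum_real {I} (r : I -> R) s : (forall i, 0 <= r i) -> has_sum r s -> csum (fun i => RtoC (r i)) (RtoC s).
Proof. intros H1 H2; split; simpl. apply rsum_of_nonneg; auto. apply rsum_zero; auto. Qed.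

Definition ipf {I} (f g : I -> Cx) : I -> Cx := fun i => Cmul (f i) (Cconj (g i)).
Definition ip {I} (f g : I -> Cx) : Cx := epsilon (inhabits C0) (fun z => csum (ipf f g) z).

Lemma ipf_bound (a b : Cx) : Rabs (fst (Cmul a (Cconj b))) <= (Cnorm2 a + Cnorm2 b) / 2 /\
                             Rabs (snd (Cmul a (Cconj b))) <= (Cnorm2 a + Cnorm2 b) / 2.
Proof. destruct a as [a1 a2], b as [b1 b2]; csimpl.
  pose proof (Rle_0_sqr (a1 - b1)). pose proof (Rle_0_sqr (a2 - b2)). pose proof (Rle_0_sqr (a1 + b1)). pose proof (Rle_0_sqr (a2 + b2)).
  pose proof (Rle_0_sqr (a1 - b2)). pose proof (Rle_0_sqr (a2 - b1)). pose proof (Rle_0_sqr (a1 + b2)). pose proof (Rle_0_sqr (a2 + b1)).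
  unfold Rsqr in *. split; apply Rabs_le; split; nra. Qed.

Lemma ip_spec {I} (f g : I -> Cx) : l2 f -> l2 g -> csum (ipf f g) (ip f g).
Proof.
  intros [A HA] [B HB]. unfold ip. apply epsilon_spec.
  assert (Hb : has_sum (fun i => (Cnorm2 (f i) + Cnorm2 (g i)) / 2) ((A + B) / 2)).
  { apply has_sum_ext with (fun i => / 2 * (Cnorm2 (f i) + Cnorm2 (g i))). intros; field.
    replace ((A + B) / 2) with (/ 2 * (A + B)) by field. apply has_sum_scal; [lra|].
    apply has_sum_plus; auto using Cnorm2_nonneg. }
  destruct (rsum_bound (fun i => fst (ipf f g i)) _ _ (fun i => proj1 (ipf_bound (f i) (g i))) Hb) as [s1 H1].
  destruct (rsum_bound (fun i => snd (ipf f g i)) _ _ (fun i => proj2 (ipf_bound (f i) (g i))) Hb) as [s2 H2].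
  exists (s1, s2). split; auto.
Qed.

Lemma ip_eq {I} (f g : I -> Cx) z : l2 f -> l2 g -> csum (ipf f g) z -> ip f g = z.
Proof. intros. eapply csum_unique; [apply ip_spec|]; eauto. Qed.

Lemma nsq_ext {I} (f g : I -> Cx) s : (forall i, f i = g i) -> nsq f s -> nsq g s.
Proof. intros H. replace g with f; auto. apply functional_extensionality; auto. Qed.

Lemma nsq_unique {I} (f : I -> Cx) s t : nsq f s -> nsq f t -> s = t.
Proof. apply has_sum_unique. Qed.

Lemma nsq_nonneg {I} (f : I -> Cx) s : nsq f s -> 0 <= s.
Proof. apply has_sum_nonneg. Qed.

Lemma l2_of_nsq {I} (f : I -> Cx) s : nsq f s -> l2 f.
Proof. intros; exists s; auto. Qed.

Lemma l2_dom {I} (f g : I -> Cx) : (forall i, Cnorm2 (f i) <= Cnorm2 (g i)) -> l2 g -> l2 f.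
Proof. intros H [s Hs]. destruct (has_sum_le_exists (fun i => Cnorm2 (f i)) _ s H Hs) as [t [Ht _]]. exists t; auto. Qed.

Lemma l2_domr {I} (f : I -> Cx) b B : (forall i, Cnorm2 (f i) <= b i) -> has_sum b B -> l2 f.
Proof. intros H Hs. destruct (has_sum_le_exists (fun i => Cnorm2 (f i)) _ B H Hs) as [t [Ht _]]. exists t; auto. Qed.

Lemma l2_add {I} (f g : I -> Cx) : l2 f -> l2 g -> l2 (fun i => Cadd (f i) (g i)).
Proof.
  intros [A HA] [B HB]. apply l2_domr with (fun i => 2 * (Cnorm2 (f i) + Cnorm2 (g i))) (2 * (A + B)).
  - intros i. destruct (f i) as [a b], (g i) as [c d]; csimpl. pose proof (Rle_0_sqr (a - c)). pose proof (Rle_0_sqr (b - d)). unfold Rsqr in *. nra.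
  - apply has_sum_scal; [lra|]. apply has_sum_plus; auto using Cnorm2_nonneg.
Qed.

Lemma l2_scal {I} (f : I -> Cx) c : l2 f -> l2 (fun i => Cmul c (f i)).
Proof.
  intros [A HA]. exists (Cnorm2 c * A). unfold nsq. apply has_sum_ext with (fun i => Cnorm2 c * Cnorm2 (f i)).
  intros; rewrite Cnorm2_mul; auto. apply has_sum_scal; auto using Cnorm2_nonneg.
Qed.

Lemma l2_sub {I} (f g : I -> Cx) : l2 f -> l2 g -> l2 (fun i => Csub (f i) (g i)).
Proof.
  intros Hf Hg. apply l2_add; auto. eapply l2_dom; [|apply (l2_scal g (-1, 0) Hg)]. intros i. right. destruct (g i); csimpl; ring.
Qed.

Lemma nsq_scal {I} (f : I -> Cx) c s : nsq f s -> nsq (fun i => Cmul c (f i)) (Cnorm2 c * s).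
Proof. intros HA. unfold nsq. apply has_sum_ext with (fun i => Cnorm2 c * Cnorm2 (f i)).
  intros; rewrite Cnorm2_mul; auto. apply has_sum_scal; auto using Cnorm2_nonneg. Qed.

Lemma ip_add {I} (f g h : I -> Cx) : l2 f -> l2 g -> l2 h -> ip (fun i => Cadd (f i) (g i)) h = Cadd (ip f h) (ip g h).
Proof.
  intros Hf Hg Hh. apply ip_eq; auto. apply l2_add; auto.
  apply csum_ext with (fun i => Cadd (ipf f h i) (ipf g h i)). intros; unfold ipf; cdes; csimpl; f_equal; ring.
  apply csum_add; apply ip_spec; auto.
Qed.

Lemma ip_scal {I} (f h : I -> Cx) c : l2 f -> l2 h -> ip (fun i => Cmul c (f i)) h = Cmul c (ip f h).
Proof.
  intros Hf Hh. apply ip_eq; auto. apply l2_scal; auto.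
  apply csum_ext with (fun i => Cmul c (ipf f h i)). intros; unfold ipf; cdes; csimpl; f_equal; ring.
  apply csum_scal; apply ip_spec; auto.
Qed.

Lemma nsq_combo {I} (h v : I -> Cx) z A N : nsq h A -> nsq v N ->
  nsq (fun i => Csub (h i) (Cmul z (v i))) (A - 2 * fst (Cmul (Cconj z) (ip h v)) + Cnorm2 z * N).
Proof.
  intros HA HN. assert (Hh : l2 h) by (exists A; auto). assert (Hv : l2 v) by (exists N; auto).
  unfold nsq. apply rsum_to_nonneg. intros; apply Cnorm2_nonneg.
  apply rsum_ext with (fun i => (Cnorm2 (h i) + (-2) * fst (Cmul (Cconj z) (ipf h v i))) + Cnorm2 z * Cnorm2 (v i)).
  { intros i. unfold ipf. destruct (h i), (v i), z; csimpl. ring. }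
  apply rsum_add. replace (A - 2 * fst (Cmul (Cconj z) (ip h v))) with (A + (-2) * fst (Cmul (Cconj z) (ip h v))) by ring.
  apply rsum_add. apply rsum_of_nonneg; auto using Cnorm2_nonneg.
  apply rsum_scal. apply (csum_scal _ _ (Cconj z) (ip_spec h v Hh Hv)).
  apply rsum_scal. apply rsum_of_nonneg; auto using Cnorm2_nonneg.
Qed.


Definition hcoef {I} (N : R) (v h : I -> Cx) : Cx :=
  if Req_EM_T N 0 then C0 else Cmul (RtoC (2 / N)) (ip h v).
Definition hh {I} (N : R) (v h : I -> Cx) : I -> Cx :=
  fun i => Csub (h i) (Cmul (hcoef N v h) (v i)).

Lemma ip_self {I} (v : I -> Cx) N : nsq v N -> ip v v = RtoC N.
Proof.
  intros H. apply ip_eq; try (exists N; auto).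
  apply csum_ext with (fun i => RtoC (Cnorm2 (v i))). intros i; unfold ipf; destruct (v i); csimpl; f_equal; ring.
  apply csum_real; auto using Cnorm2_nonneg.
Qed.

Lemma nsq_zero_pt {I} (v : I -> Cx) : nsq v 0 -> forall i, v i = C0.
Proof. intros H i. apply Cnorm2_zero. apply (has_sum_zero_inv (fun i => Cnorm2 (v i))); auto using Cnorm2_nonneg. Qed.

Lemma hh_norm {I} (N A : R) (v h : I -> Cx) : nsq v N -> nsq h A -> nsq (hh N v h) A.
Proof.
  intros HN HA. unfold hh, hcoef. destruct (Req_EM_T N 0) as [E|E].
  - apply nsq_ext with h; auto. intros i; destruct (h i), (v i); csimpl; f_equal; ring.
  - pose proof (nsq_combo h v (Cmul (RtoC (2 / N)) (ip h v)) A N HA HN) as H.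
    replace (A - 2 * fst (Cmul (Cconj (Cmul (RtoC (2 / N)) (ip h v))) (ip h v)) + Cnorm2 (Cmul (RtoC (2 / N)) (ip h v)) * N) with A in H; auto.
    destruct (ip h v) as [a b]; csimpl. field. auto.
Qed.

Lemma ip_sub_scal {I} (h v w : I -> Cx) z : l2 h -> l2 v -> l2 w ->
  ip (fun i => Csub (h i) (Cmul z (v i))) w = Csub (ip h w) (Cmul z (ip v w)).
Proof.
  intros Hh Hv Hw. unfold Csub at 1.
  rewrite (ip_add h (fun i => Copp (Cmul z (v i))) w); auto.
  - replace (fun i => Copp (Cmul z (v i))) with (fun i => Cmul (Copp z) (v i)).
    rewrite ip_scal; auto. unfold Csub; f_equal. destruct z, (ip v w); csimpl; f_equal; ring.
    apply functional_extensionality; intros i; destruct z, (v i); csimpl; f_equal; ring.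
  - eapply l2_dom; [|apply (l2_scal v (Copp z) Hv)]. intros i; right; destruct z, (v i); csimpl; ring.
Qed.

Lemma hh_l2 {I} (N : R) (v h : I -> Cx) : l2 v -> l2 h -> l2 (hh N v h).
Proof. intros. unfold hh. apply l2_sub; auto. apply l2_scal; auto. Qed.

Lemma hh_invol {I} (N : R) (v h : I -> Cx) : nsq v N -> l2 h -> forall i, hh N v (hh N v h) i = h i.
Proof.
  intros HN Hh i. assert (Hv : l2 v) by (exists N; auto).
  assert (E2 : hcoef N v (hh N v h) = Copp (hcoef N v h)).
  { unfold hcoef. destruct (Req_EM_T N 0) as [E|E]. csimpl; f_equal; ring.
    unfold hh. rewrite ip_sub_scal; auto. rewrite (ip_self v N HN). unfold hcoef. destruct (Req_EM_T N 0); [congruence|].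
    destruct (ip h v); csimpl. f_equal; field; auto. }
  unfold hh at 1. rewrite E2. unfold hh. destruct (hcoef N v h), (h i), (v i); csimpl; f_equal; ring.
Qed.

Lemma hh_add {I} (N : R) (v h1 h2 : I -> Cx) : l2 v -> l2 h1 -> l2 h2 ->
  forall i, hh N v (fun j => Cadd (h1 j) (h2 j)) i = Cadd (hh N v h1 i) (hh N v h2 i).
Proof.
  intros Hv H1 H2 i. unfold hh, hcoef. destruct (Req_EM_T N 0).
  - destruct (h1 i), (h2 i), (v i); csimpl; f_equal; ring.
  - rewrite ip_add; auto. destruct (ip h1 v), (ip h2 v), (h1 i), (h2 i), (v i); csimpl; f_equal; ring.
Qed.

Lemma hh_scal {I} (N : R) (v h : I -> Cx) c : l2 v -> l2 h ->
  forall i, hh N v (fun j => Cmul c (h j)) i = Cmul c (hh N v h i).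
Proof.
  intros Hv H1 i. unfold hh, hcoef. destruct (Req_EM_T N 0).
  - destruct c, (h i), (v i); csimpl; f_equal; ring.
  - rewrite ip_scal; auto. destruct c, (ip h v), (h i), (v i); csimpl; f_equal; ring.
Qed.


Section Tree.
Variable V : Type.
Variable root : V.
Variable par : V -> option V.
Hypothesis Htree : is_rooted_tree root par.

Lemma par_root : par root = None. Proof. apply Htree. Qed.
Lemma par_None v : par v = None -> v = root. Proof. apply Htree. Qed.

Lemma iter_None n : Nat.iter n (parO par) None = None.
Proof. induction n; simpl; auto. rewrite IHn; auto. Qed.

Lemma gen_S n w : gen root par (S n) w <-> exists y, par w = Some y /\ gen root par n y.
Proof.
  unfold gen. rewrite Nat.iter_succ_r. simpl. split.
  - destruct (par w) as [y|] eqn:E. intros; exists y; auto. rewrite iter_None; discriminate.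
  - intros [y [-> H]]; auto.
Qed.

Lemma gen_0 w : gen root par 0 w <-> w = root.
Proof. unfold gen; simpl; split; intros H; [inversion H|subst]; auto. Qed.

Lemma gen_unique n m v : gen root par n v -> gen root par m v -> n = m.
Proof.
  revert m v. induction n; intros m v H1 H2.
  - apply gen_0 in H1; subst. destruct m; auto. apply gen_S in H2. destruct H2 as [y [E _]]. rewrite par_root in E; discriminate.
  - apply gen_S in H1. destruct H1 as [y [E H1]]. destruct m.
    + apply gen_0 in H2; subst. rewrite par_root in E; discriminate.
    + apply gen_S in H2. destruct H2 as [y' [E' H2]]. rewrite E in E'. inversion E'; subst. f_equal. eauto.
Qed.

Definition lev (v : V) : nat := epsilon (inhabits 0%nat) (fun n => gen root par n v).
Lemma lev_spec v : gen root par (lev v) v.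
Proof. unfold lev. apply epsilon_spec. apply Htree. Qed.
Lemma lev_eq n v : gen root par n v -> lev v = n.
Proof. intros H. eapply gen_unique; [apply lev_spec|exact H]. Qed.
Lemma lev_child w y : par w = Some y -> lev w = S (lev y).
Proof. intros E. apply lev_eq. apply gen_S. exists y; split; auto. apply lev_spec. Qed.
Lemma lev_root : lev root = 0%nat.
Proof. apply lev_eq. apply gen_0; auto. Qed.
Lemma lev_0 v : lev v = 0%nat -> v = root.
Proof. intros H. apply gen_0. rewrite <- H. apply lev_spec. Qed.
Lemma lev_S v n : lev v = S n -> exists y, par v = Some y /\ lev y = n.
Proof. intros H. pose proof (lev_spec v) as G. rewrite H in G. apply gen_S in G. destruct G as [y [E G]].
  exists y; split; auto. apply lev_eq; auto. Qed.



Lemma nsq_e {I : Type} (u : I) : nsq (e_ u) 1.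
Proof.
  unfold nsq. replace 1 with (Cnorm2 (e_ u u)). apply (has_sum_single (fun i => Cnorm2 (e_ u i))).
  intros i Hi. unfold e_. destruct excluded_middle_informative; [congruence|]. apply Cnorm2_C0.
  apply Cnorm2_nonneg. unfold e_. destruct excluded_middle_informative; [|congruence]. csimpl; ring.
Qed.

Variable lam : V -> Cx.
Variable alpha : V -> R.
Variable x : R.
Hypothesis Hbd : bounded_op (wshift par lam).
Hypothesis H2i : two_isometry (wshift par lam).
Hypothesis Hal0 : forall v, 0 <= alpha v.
Hypothesis Hal : forall u p, par u = Some p -> nsq (wshift par lam (e_ u)) (alpha p ^ 2).
Hypothesis Hx0 : 0 <= x.
Hypothesis Hx : nsq (wshift par lam (e_ root)) (x ^ 2).

Definition lamb (u w : V) : Cx := match par w with Some p => if edec p u then lam w else C0 | None => C0 end.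

Lemma wshift_e u w : wshift par lam (e_ u) w = lamb u w.
Proof.
  unfold wshift, lamb, e_. destruct (par w); auto. destruct excluded_middle_informative; destruct edec; try congruence.
  destruct (lam w); csimpl; f_equal; ring. destruct (lam w); csimpl; f_equal; ring.
Qed.

Definition Nv (u : V) : R := match par u with Some p => alpha p ^ 2 | None => x ^ 2 end.

Lemma nsq_lamb u : nsq (lamb u) (Nv u).
Proof.
  unfold Nv. destruct (par u) eqn:E.
  - apply nsq_ext with (wshift par lam (e_ u)). apply wshift_e. apply Hal; auto.
  - apply par_None in E; auto. subst. apply nsq_ext with (wshift par lam (e_ root)). apply wshift_e. auto.
Qed.

Lemma lamb_child u w : par w = Some u -> lamb u w = lam w.
Proof. intros E; unfold lamb; rewrite E; destruct edec; congruence. Qed.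
Lemma lamb_nchild u w : par w <> Some u -> lamb u w = C0.
Proof. intros E; unfold lamb; destruct (par w); auto; destruct edec; congruence. Qed.

Lemma Nv_child u y : par y = Some u -> Nv y = alpha u ^ 2.
Proof. intros E; unfold Nv; rewrite E; auto. Qed.

Lemma Nv_nonneg u : 0 <= Nv u.
Proof. eapply nsq_nonneg; apply nsq_lamb. Qed.

Lemma two_rel u : 1 - 2 * Nv u + alpha u ^ 2 * Nv u = 0.
Proof.
  set (S := wshift par lam).
  assert (He : l2 (e_ u)) by (exists 1; apply nsq_e).
  apply (H2i (e_ u) 1 (Nv u) (alpha u ^ 2 * Nv u) He (nsq_e u)).
  - apply nsq_ext with (lamb u). intros; rewrite wshift_e; auto. apply nsq_lamb.
  - set (g := fun w => Cnorm2 (S (S (e_ u)) w)).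
    set (s := fun k : option V => match k with Some y => Cnorm2 (lamb u y) * Nv y | None => 0 end).
    unfold nsq. fold S. fold g. apply (has_sum_partition par g s).
    { intros; apply Cnorm2_nonneg. }
    { intros [y|].
      - simpl. apply has_sum_ext with (fun w => Cnorm2 (lamb u y) * Cnorm2 (lamb y w)).
        + intros w. unfold blk, g, S. destruct edec as [E|E].
          * unfold wshift at 1. rewrite E. rewrite wshift_e. rewrite Cnorm2_mul. rewrite (lamb_child y w E). ring.
          * rewrite (lamb_nchild y w E). rewrite Cnorm2_C0; ring.
        + apply has_sum_scal. apply Cnorm2_nonneg. apply nsq_lamb.
      - simpl. apply has_sum_zero'. intros w. unfold blk, g, S, wshift. destruct edec as [E|E].
        rewrite E. apply Cnorm2_C0. auto. }
    apply (has_sum_reindex s (fun y => alpha u ^ 2 * Cnorm2 (lamb u y)) Some).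
    + intros j _. simpl. destruct (classic (par j = Some u)) as [E|E].
      rewrite (Nv_child u j E). ring. rewrite lamb_nchild; auto. rewrite Cnorm2_C0; ring.
    + intros j j' _ _ E; inversion E; auto.
    + intros [i|] Hi; [|simpl in Hi; lra]. exists i; split; auto. simpl in Hi. intro E. apply Hi.
      destruct (classic (par i = Some u)) as [E'|E'].
      rewrite (Nv_child u i E'). rewrite <- E. ring. rewrite lamb_nchild; auto. rewrite Cnorm2_C0; ring.
    + apply has_sum_scal. apply pow2_ge_0. apply nsq_lamb.
Qed.


Lemma Nv_pos u : 0 < Nv u.
Proof. pose proof (two_rel u). pose proof (Nv_nonneg u). destruct (Req_dec (Nv u) 0) as [E|E]; [rewrite E in H; lra|lra]. Qed.

Lemma alpha_rel u : alpha u ^ 2 = 2 - / Nv u.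
Proof. pose proof (two_rel u). pose proof (Nv_pos u). field_simplify; [|lra]. apply (Rmult_eq_reg_r (Nv u)); [|lra].
  field_simplify; lra. Qed.

Lemma child_ex u : exists w, par w = Some u /\ lam w <> C0.
Proof.
  apply NNPP; intro Hn. assert (Nv u = 0); [|pose proof (Nv_pos u); lra].
  apply (nsq_unique (lamb u)). apply nsq_lamb. unfold nsq. apply has_sum_zero'. intros w.
  destruct (classic (par w = Some u)) as [E|E]. rewrite lamb_child; auto.
  destruct (classic (lam w = C0)) as [E'|E']. rewrite E'; apply Cnorm2_C0. exfalso; apply Hn; exists w; auto.
  rewrite lamb_nchild; auto; apply Cnorm2_C0.
Qed.

Definition cc (u : V) : V := epsilon (inhabits u) (fun w => par w = Some u /\ lam w <> C0).
Lemma cc_spec u : par (cc u) = Some u /\ lam (cc u) <> C0.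
Proof. unfold cc. apply epsilon_spec. apply child_ex. Qed.
Lemma cc_par u : par (cc u) = Some u. Proof. apply cc_spec. Qed.
Lemma cc_inj a b : cc a = cc b -> a = b.
Proof. intros E. pose proof (cc_par a). rewrite E, cc_par in H. inversion H; auto. Qed.
Lemma lev_cc u : lev (cc u) = S (lev u). Proof. apply lev_child, cc_par. Qed.

Lemma level_ne k : exists u, lev u = k.
Proof. induction k. exists root; apply lev_root. destruct IHk as [u Hu]. exists (cc u). rewrite lev_cc; auto. Qed.

Definition sx := x ^ 2 - 1.
Definition tt (k : nat) : R := (1 + (INR k + 1) * sx) / (1 + INR k * sx).

Lemma tt_main k : 0 < 1 + INR k * sx /\ forall u, lev u = k -> Nv u = tt k.
Proof.
  induction k.
  - split. simpl; lra. intros u Hu. apply lev_0 in Hu; subst. unfold Nv, tt, sx. rewrite par_root. simpl. field.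
  - destruct IHk as [Hp Hk]. destruct (level_ne k) as [u Hu].
    pose proof (Nv_pos u) as Hpos. rewrite (Hk u Hu) in Hpos. unfold tt in Hpos.
    assert (Hp' : 0 < 1 + INR (S k) * sx).
    { rewrite S_INR. apply Rlt_gt in Hp. assert (0 < (1 + (INR k + 1) * sx) / (1 + INR k * sx) * (1 + INR k * sx)) by (apply Rmult_lt_0_compat; lra).
      field_simplify in H; lra. }
    split; auto. intros w Hw. destruct (lev_S w k Hw) as [y [Ey Hy]].
    rewrite (Nv_child y w Ey). rewrite alpha_rel. rewrite (Hk y Hy). unfold tt. rewrite S_INR in *. field. split; lra.
Qed.

Lemma sx_nonneg : 0 <= sx.
Proof.
  apply Rnot_lt_le; intro H. destruct (INR_unbounded (- / sx)) as [n Hn].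
  destruct (tt_main n) as [Hp _]. assert (INR n * sx < -1); [|lra].
  apply Rgt_lt in Hn. apply (Rmult_lt_compat_r (- sx)) in Hn; [|lra]. replace (- / sx * - sx) with 1 in Hn by (field; lra). lra.
Qed.

Lemma x_ge1 : 1 <= x.
Proof. pose proof sx_nonneg. unfold sx in H. nra. Qed.

Definition bb (k : nat) : R := xi k x.

Lemma xi_sq n y : 1 <= y -> xi n y ^ 2 = (1 + (INR n + 1) * (y ^ 2 - 1)) / (1 + INR n * (y ^ 2 - 1)).
Proof.
  intros Hy. unfold xi. rewrite pow2_sqrt; auto. pose proof (pos_INR n). assert (0 <= y ^ 2 - 1) by nra.
  apply Rle_mult_inv_pos; nra.
Qed.

Lemma xi_ge1 n y : 1 <= y -> 1 <= xi n y.
Proof.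
  intros Hy. pose proof (xi_sq n y Hy). pose proof (pos_INR n). assert (0 <= y ^ 2 - 1) by nra.
  assert (1 <= xi n y ^ 2). { rewrite H. apply (Rmult_le_reg_r (1 + INR n * (y ^ 2 - 1))); [nra|]. field_simplify; nra. }
  assert (0 <= xi n y) by (unfold xi; apply sqrt_pos). nra.
Qed.

Lemma bb_sq k : bb k ^ 2 = tt k.
Proof. unfold bb, tt, sx. apply xi_sq. apply x_ge1. Qed.

Lemma bb_pos k : 0 < bb k.
Proof. pose proof (xi_ge1 k x x_ge1). unfold bb; lra. Qed.

Lemma Nv_bb u : Nv u = bb (lev u) ^ 2.
Proof. rewrite bb_sq. apply tt_main; auto. Qed.

Lemma sq_inj a b : 0 <= a -> 0 <= b -> a ^ 2 = b ^ 2 -> a = b.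
Proof. intros. destruct (Req_dec a b); auto. assert ((a - b) * (a + b) = 0) by (simpl in *; nra).
  apply Rmult_integral in H3. destruct H3; nra. Qed.

Lemma xi_semi m kk : xi m (xi (S kk) x) = bb (m + S kk).
Proof.
  unfold bb. pose proof x_ge1. pose proof (xi_ge1 (S kk) x H).
  assert (0 <= xi m (xi (S kk) x)) by (unfold xi; apply sqrt_pos).
  assert (0 <= xi (m + S kk) x) by (unfold xi; apply sqrt_pos).
  apply sq_inj; auto. rewrite !xi_sq; auto.
  rewrite plus_INR, !S_INR. pose proof (pos_INR m). pose proof (pos_INR kk).
  assert (0 <= x ^ 2 - 1) by nra. field. split; nra.
Qed.


Definition rr (y : V) : R := sqrt (Cnorm2 (lam (cc y))).
Definition ph (y : V) : Cx := (fst (lam (cc y)) / rr y, snd (lam (cc y)) / rr y).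

Lemma rr_pos y : 0 < rr y.
Proof.
  unfold rr. apply sqrt_lt_R0. destruct (cc_spec y) as [_ H]. pose proof (Cnorm2_nonneg (lam (cc y))).
  destruct H0; auto. exfalso; apply H. apply Cnorm2_zero; auto.
Qed.

Lemma rr_sq y : rr y * rr y = Cnorm2 (lam (cc y)).
Proof. unfold rr. apply sqrt_sqrt, Cnorm2_nonneg. Qed.

Lemma ph_unit y : Cmul (Cconj (ph y)) (ph y) = Defs.C1.
Proof.
  pose proof (rr_pos y). pose proof (rr_sq y). unfold ph. destruct (lam (cc y)) as [a b]. csimpl.
  f_equal. apply (Rmult_eq_reg_r (rr y * rr y)); [|nra]. field_simplify. all: try lra.
Qed.

Lemma lam_cc_ph y : lam (cc y) = Cmul (RtoC (rr y)) (ph y).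
Proof. pose proof (rr_pos y). unfold ph. destruct (lam (cc y)) as [a b]. csimpl. f_equal; field; lra. Qed.

Lemma Cnorm2_ph y : Cnorm2 (ph y) = 1.
Proof. pose proof (ph_unit y). destruct (ph y) as [a b]. csimpl. inversion H. unfold Cnorm2; simpl. lra. Qed.

Definition zz (y : V) : Cx := Cmul (RtoC (/ bb (lev y))) (Cconj (ph y)).
Definition vv (y : V) : V -> Cx := fun w => Csub (e_ (cc y) w) (Cmul (zz y) (lamb y w)).
Definition NN (y : V) : R := 2 - 2 * rr y / bb (lev y).

Lemma e_out {I : Type} (a w : I) : w <> a -> e_ a w = C0.
Proof. intros; unfold e_; destruct excluded_middle_informative; congruence. Qed.
Lemma e_in {I : Type} (a : I) : e_ a a = Defs.C1.
Proof. intros; unfold e_; destruct excluded_middle_informative; congruence. Qed.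

Lemma vv_out y w : par w <> Some y -> vv y w = C0.
Proof.
  intros E. unfold vv. rewrite lamb_nchild; auto. rewrite e_out. csimpl; f_equal; ring.
  intro; subst. apply E; apply cc_par.
Qed.

Lemma l2_lamb y : l2 (lamb y). Proof. exists (Nv y); apply nsq_lamb. Qed.
Lemma l2_e {I : Type} (a : I) : l2 (e_ a). Proof. exists 1; apply nsq_e. Qed.

Lemma ip_e_lamb y : ip (e_ (cc y)) (lamb y) = Cconj (lam (cc y)).
Proof.
  apply ip_eq. apply l2_e. apply l2_lamb.
  replace (Cconj (lam (cc y))) with (ipf (e_ (cc y)) (lamb y) (cc y)).
  apply csum_single. intros i Hi. unfold ipf. rewrite e_out; auto. csimpl; f_equal; ring.
  unfold ipf. rewrite e_in, lamb_child by apply cc_par. destruct (lam (cc y)); csimpl; f_equal; ring.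
Qed.

Lemma bb_lev_sq y : bb (lev y) * bb (lev y) = Nv y.
Proof. rewrite Nv_bb. ring. Qed.

Lemma alg_vv a b r c : a * a + b * b = 1 -> 0 < c ->
  2 - 2 * r / c = 1 - 2 * fst (Cmul (Cconj (Cmul (RtoC (/ c)) (Cconj (a, b)))) (Cconj (Cmul (RtoC r) (a, b))))
     + Cnorm2 (Cmul (RtoC (/ c)) (Cconj (a, b))) * (c * c).
Proof. intros H Hc. unfold Cconj, Cmul, RtoC, Cnorm2; simpl. field_simplify; try lra.
  replace (b ^ 2) with (1 - a ^ 2) by (simpl; lra). field; lra. Qed.

Lemma nsq_vv y : nsq (vv y) (NN y).
Proof.
  unfold vv. pose proof (nsq_combo (e_ (cc y)) (lamb y) (zz y) 1 (Nv y) (nsq_e _) (nsq_lamb y)) as H.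
  eapply nsq_ext; [|replace (NN y) with (1 - 2 * fst (Cmul (Cconj (zz y)) (ip (e_ (cc y)) (lamb y))) + Cnorm2 (zz y) * Nv y); [exact H|]].
  intros; auto.
  rewrite ip_e_lamb. rewrite lam_cc_ph. unfold zz. rewrite <- bb_lev_sq. pose proof (bb_pos (lev y)).
  pose proof (Cnorm2_ph y). unfold NN. destruct (ph y) as [a b]. unfold Cnorm2 in H1; simpl in H1.
  symmetry; apply alg_vv; auto.
Qed.

Lemma l2_vv y : l2 (vv y). Proof. exists (NN y); apply nsq_vv. Qed.

Definition Qf (h : V -> Cx) : V -> Cx :=
  fun w => match par w with Some y => hh (NN y) (vv y) h w | None => h w end.

Definition rs (P : V -> Prop) (h : V -> Cx) : V -> Cx :=
  fun w => if excluded_middle_informative (P w) then h w else C0.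

Lemma ipf_vv_rs y h : forall w, ipf (rs (fun w => par w = Some y) h) (vv y) w = ipf h (vv y) w.
Proof.
  intros w. unfold ipf, rs. destruct excluded_middle_informative; auto. rewrite vv_out; auto. csimpl; f_equal; ring.
Qed.

Lemma ip_vv_rs y h : ip (rs (fun w => par w = Some y) h) (vv y) = ip h (vv y).
Proof. unfold ip. f_equal. apply functional_extensionality. intros z. f_equal. apply functional_extensionality. apply ipf_vv_rs. Qed.

Lemma hcoef_rs y h : hcoef (NN y) (vv y) (rs (fun w => par w = Some y) h) = hcoef (NN y) (vv y) h.
Proof. unfold hcoef. rewrite ip_vv_rs. auto. Qed.

Lemma Qf_loc h w y : par w = Some y -> Qf h w = hh (NN y) (vv y) (rs (fun w => par w = Some y) h) w.
Proof. intros E. unfold Qf. rewrite E. unfold hh. rewrite hcoef_rs. unfold rs. destruct excluded_middle_informative; auto; congruence. Qed.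

Lemma rs_Qf y h : forall w, rs (fun w => par w = Some y) (Qf h) w = hh (NN y) (vv y) (rs (fun w => par w = Some y) h) w.
Proof.
  intros w. unfold rs at 1. destruct excluded_middle_informative as [E|E]. apply Qf_loc; auto.
  unfold hh. rewrite vv_out; auto. unfold rs. destruct excluded_middle_informative; [congruence|]. csimpl; f_equal; ring.
Qed.

Lemma Cmul_eq0 z u : Cmul z u = C0 -> z <> C0 -> u = C0.
Proof.
  intros H Hz. apply Cnorm2_zero. assert (Cnorm2 (Cmul z u) = 0) by (rewrite H; apply Cnorm2_C0).
  rewrite Cnorm2_mul in H0. apply Rmult_integral in H0. destruct H0; auto. exfalso; apply Hz, Cnorm2_zero; auto.
Qed.

Lemma zz_ne y : zz y <> C0.
Proof.
  intro H. assert (Cnorm2 (zz y) = 0) by (rewrite H; apply Cnorm2_C0). unfold zz in H0.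
  rewrite Cnorm2_mul in H0. pose proof (Cnorm2_ph y). pose proof (bb_pos (lev y)).
  replace (Cnorm2 (Cconj (ph y))) with (Cnorm2 (ph y)) in H0 by (destruct (ph y); csimpl; ring).
  rewrite H1 in H0. unfold RtoC, Cnorm2 in H0; simpl in H0.
  assert (/ bb (lev y) <> 0) by (apply Rinv_neq_0_compat; lra). nra.
Qed.

Lemma ip_lamb_vv y : ip (lamb y) (vv y) = Cmul (RtoC (rr y - bb (lev y))) (ph y).
Proof.
  apply ip_eq. apply l2_lamb. apply l2_vv.
  apply csum_ext with (fun w => Cadd (ipf (lamb y) (e_ (cc y)) w) (Cmul (Copp (Cconj (zz y))) (RtoC (Cnorm2 (lamb y w))))).
  { intros w. unfold ipf, vv. destruct (lamb y w), (e_ (cc y) w), (zz y). csimpl. f_equal; ring. }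
  replace (Cmul (RtoC (rr y - bb (lev y))) (ph y)) with
    (Cadd (ipf (lamb y) (e_ (cc y)) (cc y)) (Cmul (Copp (Cconj (zz y))) (RtoC (Nv y)))).
  - apply csum_add. apply csum_single. intros i Hi. unfold ipf. rewrite e_out; auto. destruct (lamb y i); csimpl; f_equal; ring.
    apply csum_scal. apply csum_real. intros; apply Cnorm2_nonneg. apply nsq_lamb.
  - unfold ipf. rewrite e_in. rewrite lamb_child by apply cc_par. rewrite lam_cc_ph. rewrite <- bb_lev_sq.
    unfold zz. pose proof (bb_pos (lev y)). destruct (ph y) as [a b]. csimpl. f_equal; field; lra.
Qed.

Lemma alg_hh (l e p : Cx) c : c <> 0 -> Cnorm2 p = 1 ->
  Csub l (Cmul (Cmul (RtoC (- c)) p) (Csub e (Cmul (Cmul (RtoC (/ c)) (Cconj p)) l))) = Cmul (RtoC c) (Cmul p e).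
Proof.
  intros Hc Hp. destruct l as [l1 l2], e as [e1 e2], p as [a b]. unfold Cnorm2 in Hp; simpl in Hp. csimpl.
  assert (H1 : l1 * c * a ^ 2 + l1 * c * b ^ 2 = l1 * c) by (replace (l1 * c * a ^ 2 + l1 * c * b ^ 2) with (l1 * c * (a * a + b * b)) by ring; rewrite Hp; ring).
  assert (H2 : l2 * c * a ^ 2 + l2 * c * b ^ 2 = l2 * c) by (replace (l2 * c * a ^ 2 + l2 * c * b ^ 2) with (l2 * c * (a * a + b * b)) by ring; rewrite Hp; ring).
  f_equal; field_simplify; auto; apply (Rmult_eq_reg_r c); auto; field_simplify; auto; lra.
Qed.

Lemma hh_lamb y w : hh (NN y) (vv y) (lamb y) w =
  if edec w (cc y) then Cmul (RtoC (bb (lev y))) (ph y) else C0.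
Proof.
  pose proof (bb_pos (lev y)) as Hb. pose proof (Cnorm2_ph y) as Hph.
  unfold hh, hcoef. destruct (Req_EM_T (NN y) 0) as [E|E].
  - pose proof (nsq_vv y) as Hv. rewrite E in Hv. pose proof (nsq_zero_pt _ Hv) as Z.
    assert (Hc : rr y = bb (lev y)).
    { specialize (Z (cc y)). unfold vv in Z. rewrite e_in, lamb_child, lam_cc_ph in Z by apply cc_par.
      unfold zz in Z. destruct (ph y) as [a b]. unfold Cnorm2 in Hph; simpl in Hph. csimpl. inversion Z.
      apply (Rmult_eq_reg_r (/ bb (lev y))). 2:{ apply Rinv_neq_0_compat; lra. }
      field_simplify; try lra. nra. }
    destruct edec as [->|ne].
    + rewrite lamb_child by apply cc_par. rewrite lam_cc_ph, Hc. csimpl; destruct (ph y); f_equal; ring.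
    + specialize (Z w). unfold vv in Z. rewrite e_out in Z; auto.
      assert (Cmul (zz y) (lamb y w) = C0). { destruct (Cmul (zz y) (lamb y w)); csimpl; inversion Z; f_equal; lra. }
      apply Cmul_eq0 in H; [|apply zz_ne]. rewrite H. csimpl; f_equal; ring.
  - rewrite ip_lamb_vv. unfold vv. assert (Hne : bb (lev y) - rr y <> 0). { unfold NN in E. intro; apply E.
      replace (rr y) with (bb (lev y)) by lra. field; lra. }
    replace (Cmul (RtoC (2 / NN y)) (Cmul (RtoC (rr y - bb (lev y))) (ph y))) with (Cmul (RtoC (- bb (lev y))) (ph y)).
    2:{ unfold NN. destruct (ph y); csimpl; f_equal; field; split; lra. }
    unfold zz. rewrite alg_hh; try lra; auto. destruct edec as [->|ne].
    + rewrite e_in. destruct (ph y); csimpl; f_equal; ring.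
    + rewrite e_out; auto. destruct (ph y); csimpl; f_equal; ring.
Qed.


Lemma has_sum_transfer {I K : Type} (p : I -> K) (g g' : I -> R) A :
  (forall i, 0 <= g i) -> (forall i, 0 <= g' i) ->
  (forall k a, has_sum (blk p g k) a -> has_sum (blk p g' k) a) -> has_sum g A -> has_sum g' A.
Proof.
  intros Hg Hg' Hb HA.
  assert (Ex : forall k, exists a, has_sum (blk p g k) a).
  { intros k. destruct (has_sum_le_exists (blk p g k) g A) as [a [Ha _]]; eauto.
    intros i; unfold blk; destruct edec; auto; lra. }
  destruct (classic (inhabited R)) as [Hi|Hi]; [|exfalso; apply Hi; constructor; exact 0].
  set (s := fun k => epsilon Hi (fun a => has_sum (blk p g k) a)).
  assert (Hs : forall k, has_sum (blk p g k) (s k)) by (intros k; apply epsilon_spec; auto).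
  apply (has_sum_partition p g' s A Hg'). intros k; apply Hb; auto.
  apply (has_sum_partition p g s A Hg Hs). auto.
Qed.

Lemma has_sum_ex_dom {I : Type} (g h : I -> R) A : (forall i, g i <= h i) -> has_sum h A -> exists a, has_sum g a.
Proof. intros H HA. destruct (has_sum_le_exists g h A H HA) as [a [Ha _]]; eauto. Qed.

Lemma nsq_rs_sub (P Q : V -> Prop) h A : (forall w, Q w -> P w) -> nsq (rs P h) A -> exists a, nsq (rs Q h) a.
Proof.
  intros HQ HA. apply (has_sum_ex_dom (fun w => Cnorm2 (rs Q h w)) (fun w => Cnorm2 (rs P h w)) A); auto. intros w. unfold rs.
  destruct excluded_middle_informative; destruct excluded_middle_informative; try lra; try (rewrite Cnorm2_C0); try (apply Cnorm2_nonneg).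
  exfalso; auto.
Qed.

Lemma blk_rs {K : Type} (p : V -> K) (P : V -> Prop) h k w :
  blk p (fun w => Cnorm2 (rs P h w)) k w = Cnorm2 (rs (fun w => P w /\ p w = k) h w).
Proof.
  unfold blk, rs. destruct edec; repeat destruct excluded_middle_informative; try tauto; try (rewrite Cnorm2_C0); auto.
Qed.

Definition rl (m : nat) := rs (fun w => lev w = m).

Lemma nsq_zero_fam (f : V -> Cx) a : (forall w, f w = C0) -> nsq f a -> a = 0.
Proof. intros H Ha. apply (nsq_unique f); auto. unfold nsq. apply has_sum_zero'. intros; rewrite H; apply Cnorm2_C0. Qed.

Lemma nsq_zero_fam' (f : V -> Cx) : (forall w, f w = C0) -> nsq f 0.
Proof. intros H. unfold nsq. apply has_sum_zero'. intros; rewrite H; apply Cnorm2_C0. Qed.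

Lemma Q_level m h A : nsq (rl (S m) h) A -> nsq (rl (S m) (Qf h)) A.
Proof.
  unfold nsq, rl. apply has_sum_transfer with par; try (intros; apply Cnorm2_nonneg).
  intros k a Ha. apply has_sum_ext with (fun w => Cnorm2 (rs (fun w => lev w = S m /\ par w = k) (Qf h) w)).
  intros; rewrite blk_rs; auto.
  apply has_sum_ext with (h := fun w => Cnorm2 (rs (fun w => lev w = S m /\ par w = k) h w)) in Ha.
  2:{ intros; rewrite blk_rs; auto. }
  destruct k as [y|].
  - destruct (classic (lev y = m)) as [Ey|Ey].
    + assert (E1 : forall f w, rs (fun w => lev w = S m /\ par w = Some y) f w = rs (fun w => par w = Some y) f w).
      { intros f w. unfold rs. repeat destruct excluded_middle_informative; try tauto.
        exfalso. apply n. split; auto. rewrite (lev_child w y e); auto. }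
      apply has_sum_ext with (fun w => Cnorm2 (hh (NN y) (vv y) (rs (fun w => par w = Some y) h) w)).
      intros w; rewrite E1, rs_Qf; auto.
      apply hh_norm. apply nsq_vv. unfold nsq. eapply has_sum_ext; [|exact Ha]. intros; simpl; rewrite E1; auto.
    + assert (E1 : forall f w, rs (fun w => lev w = S m /\ par w = Some y) f w = C0).
      { intros f w. unfold rs. destruct excluded_middle_informative as [[A1 A2]|]; auto.
        exfalso. apply Ey. rewrite (lev_child w y A2) in A1. lia. }
      replace a with 0. apply has_sum_zero'. intros; rewrite E1; apply Cnorm2_C0.
      symmetry. apply (nsq_zero_fam _ a (E1 h) Ha).
  - assert (E1 : forall f w, rs (fun w => lev w = S m /\ par w = None) f w = C0).
    { intros f w. unfold rs. destruct excluded_middle_informative as [[A1 A2]|]; auto.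
      apply par_None in A2. subst. rewrite lev_root in A1. discriminate. }
    replace a with 0. apply has_sum_zero'. intros; rewrite E1; apply Cnorm2_C0.
    symmetry. apply (nsq_zero_fam _ a (E1 h) Ha).
Qed.

Definition chosen (w : V) : Prop := match par w with Some y => w = cc y | None => False end.
Definition pr (w : V) : V := match par w with Some y => y | None => root end.

Lemma chosen_cc y : chosen (cc y). Proof. unfold chosen; rewrite cc_par; auto. Qed.
Lemma pr_cc y : pr (cc y) = y. Proof. unfold pr; rewrite cc_par; auto. Qed.
Lemma chosen_inv w : chosen w -> w = cc (pr w).
Proof. unfold chosen, pr. destruct (par w); tauto. Qed.

Lemma lev_pr w m : lev w = S m -> lev (pr w) = m.
Proof. intros H. destruct (lev_S w m H) as [y [E Hy]]. unfold pr; rewrite E; auto. Qed.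

Lemma nsq_cc m (k k' : V -> Cx) a :
  (forall y, lev y = m -> Cnorm2 (k' (cc y)) = Cnorm2 (k y)) ->
  (nsq (rl m k) a <-> nsq (rs (fun w => lev w = S m /\ chosen w) k') a).
Proof.
  intros Hk. unfold nsq. symmetry.
  apply (has_sum_reindex (fun w => Cnorm2 (rs (fun w => lev w = S m /\ chosen w) k' w)) (fun y => Cnorm2 (rl m k y)) cc); auto.
  + intros j Hj. unfold rl, rs in *. destruct (excluded_middle_informative (lev j = m)); [|rewrite Cnorm2_C0 in Hj; lra].
    destruct excluded_middle_informative as [_|n]; auto. exfalso; apply n. split. rewrite lev_cc; auto. apply chosen_cc.
  + intros j j' _ _ E; apply cc_inj; auto.
  + intros i Hi. unfold rs in Hi. destruct excluded_middle_informative as [[A1 A2]|]; [|rewrite Cnorm2_C0 in Hi; lra].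
    exists (pr i). pose proof (chosen_inv i A2) as Ei. split; [|auto]. unfold rl, rs.
    destruct excluded_middle_informative as [_|n]; [|exfalso; apply n; apply lev_pr; auto].
    rewrite <- Hk by (apply lev_pr; auto). rewrite <- Ei; auto.
Qed.


Definition chb (w : V) : bool := if excluded_middle_informative (chosen w) then true else false.
Lemma chb_true w : chb w = true <-> chosen w.
Proof. unfold chb; destruct excluded_middle_informative; split; intros; auto; congruence. Qed.
Lemma chb_false w : chb w = false <-> ~ chosen w.
Proof. unfold chb; destruct excluded_middle_informative; split; intros; auto; congruence. Qed.

Fixpoint Wl (m : nat) (h : V -> Cx) : V -> Cx :=
  match m with
  | O => h
  | S m' => fun w => if excluded_middle_informative (chosen w)
                     then Wl m' (fun y => Cmul (Cconj (ph y)) (Qf h (cc y))) (pr w)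
                     else Qf h w
  end.

Fixpoint Rl (m : nat) (g : V -> Cx) : V -> Cx :=
  match m with
  | O => g
  | S m' => Qf (fun w => if excluded_middle_informative (chosen w)
                         then Cmul (ph (pr w)) (Rl m' (fun y => g (cc y)) (pr w))
                         else g w)
  end.

Definition Pm (m : nat) (g : V -> Cx) : V -> Cx :=
  fun w => if excluded_middle_informative (chosen w)
           then Cmul (ph (pr w)) (Rl m (fun y => g (cc y)) (pr w)) else g w.

Lemma Rl_S m g : Rl (S m) g = Qf (Pm m g). Proof. reflexivity. Qed.

Lemma Qf_dep m h h' : (forall w, lev w = S m -> h w = h' w) -> forall w, lev w = S m -> Qf h w = Qf h' w.
Proof.
  intros H w Hw. destruct (lev_S w m Hw) as [y [E Hy]]. rewrite !(Qf_loc _ w y E).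
  replace (rs (fun w => par w = Some y) h) with (rs (fun w => par w = Some y) h'); auto.
  apply functional_extensionality; intros w'. unfold rs. destruct excluded_middle_informative; auto.
  symmetry; apply H. rewrite (lev_child w' y e); auto.
Qed.

Lemma W_dep m : forall h h', (forall w, lev w = m -> h w = h' w) -> forall w, lev w = m -> Wl m h w = Wl m h' w.
Proof.
  induction m; intros h h' H w Hw; simpl; auto.
  destruct excluded_middle_informative as [C|C].
  - apply IHm; [|apply lev_pr; auto]. intros y Hy. f_equal. apply (Qf_dep m); auto. rewrite lev_cc; auto.
  - apply (Qf_dep m); auto.
Qed.

Lemma Cnorm2_phz y z : Cnorm2 (Cmul (ph y) z) = Cnorm2 z.
Proof. rewrite Cnorm2_mul, Cnorm2_ph; ring. Qed.
Lemma Cnorm2_cphz y z : Cnorm2 (Cmul (Cconj (ph y)) z) = Cnorm2 z.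
Proof. rewrite Cnorm2_mul. replace (Cnorm2 (Cconj (ph y))) with (Cnorm2 (ph y)) by (destruct (ph y); csimpl; ring).
  rewrite Cnorm2_ph; ring. Qed.

Lemma rs_chb_true m f w : rs (fun w => lev w = S m /\ chb w = true) f w = rs (fun w => lev w = S m /\ chosen w) f w.
Proof. unfold rs. repeat destruct excluded_middle_informative; auto; exfalso; rewrite chb_true in *; tauto. Qed.

Lemma split_transfer m (f f' : V -> Cx) A :
  (forall w, lev w = S m -> ~ chosen w -> f' w = f w) ->
  (forall a, nsq (rs (fun w => lev w = S m /\ chosen w) f) a -> nsq (rs (fun w => lev w = S m /\ chosen w) f') a) ->
  nsq (rl (S m) f) A -> nsq (rl (S m) f') A.
Proof.
  intros Hn Hc. unfold nsq, rl. apply has_sum_transfer with chb; try (intros; apply Cnorm2_nonneg).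
  intros [|] a Ha.
  - apply has_sum_ext with (fun w => Cnorm2 (rs (fun w => lev w = S m /\ chosen w) f' w)).
    { intros; rewrite blk_rs, rs_chb_true; auto. }
    apply Hc. unfold nsq. eapply has_sum_ext; [|exact Ha]. intros; simpl; rewrite blk_rs, rs_chb_true; auto.
  - eapply has_sum_ext; [|exact Ha]. intros w. rewrite !blk_rs. unfold rs.
    destruct excluded_middle_informative as [[A1 A2]|]; auto. rewrite Hn; auto. apply chb_false; auto.
Qed.

Lemma W_norm m : forall h A, nsq (rl m h) A -> nsq (rl m (Wl m h)) A.
Proof.
  induction m; intros h A HA; simpl; auto.
  apply Q_level in HA. apply split_transfer with (Qf h); auto.
  - intros w _ C. destruct excluded_middle_informative; tauto.
  - intros a Ha. set (h' := fun y => Cmul (Cconj (ph y)) (Qf h (cc y))).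
    apply (nsq_cc m h' (Qf h) a) in Ha. 2:{ intros; unfold h'; rewrite Cnorm2_cphz; auto. }
    apply IHm in Ha. apply (nsq_cc m (Wl m h')); auto.
    intros y Hy. rewrite pr_cc. destruct excluded_middle_informative as [_|n]; auto. exfalso; apply n, chosen_cc.
Qed.

Lemma P_norm m g A : (forall g A, nsq (rl m g) A -> nsq (rl m (Rl m g)) A) ->
  nsq (rl (S m) g) A -> nsq (rl (S m) (Pm m g)) A.
Proof.
  intros IH HA. apply split_transfer with g; auto.
  - intros w _ C. unfold Pm. destruct excluded_middle_informative; tauto.
  - intros a Ha. apply (nsq_cc m (fun y => g (cc y)) g a) in Ha; auto.
    apply IH in Ha. apply (nsq_cc m (Rl m (fun y => g (cc y)))); auto.
    intros y Hy. unfold Pm. rewrite pr_cc. destruct excluded_middle_informative as [_|n].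
    apply Cnorm2_phz. exfalso; apply n, chosen_cc.
Qed.

Lemma R_norm m : forall g A, nsq (rl m g) A -> nsq (rl m (Rl m g)) A.
Proof.
  induction m; intros g A HA; simpl; auto.
  apply Q_level. apply P_norm; auto.
Qed.

Lemma l2_rs_sub (P Q : V -> Prop) h : (forall w, Q w -> P w) -> l2 (rs P h) -> l2 (rs Q h).
Proof. intros H [A HA]. destruct (nsq_rs_sub P Q h A H HA) as [a Ha]; exists a; auto. Qed.

Lemma rs_y_sub m y : lev y = m -> forall w, par w = Some y -> lev w = S m.
Proof. intros Hy w E; rewrite (lev_child w y E); auto. Qed.

Lemma QQ m P : l2 (rl (S m) P) -> forall w, lev w = S m -> Qf (Qf P) w = P w.
Proof.
  intros HP w Hw. destruct (lev_S w m Hw) as [y [E Hy]]. rewrite (Qf_loc _ w y E).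
  replace (rs (fun w => par w = Some y) (Qf P)) with (hh (NN y) (vv y) (rs (fun w => par w = Some y) P)).
  2:{ apply functional_extensionality; intros; rewrite rs_Qf; auto. }
  rewrite hh_invol. unfold rs; destruct excluded_middle_informative; congruence.
  apply nsq_vv. apply l2_rs_sub with (fun w => lev w = S m); auto. apply rs_y_sub; auto.
Qed.

Lemma cph_ph y z : Cmul (Cconj (ph y)) (Cmul (ph y) z) = z.
Proof. pose proof (ph_unit y). destruct (ph y) as [a b], z. csimpl. inversion H.
  assert (E : a * a + b * b = 1) by lra. f_equal.
  replace (a * (a * r - b * r0) - - b * (a * r0 + b * r)) with ((a * a + b * b) * r) by ring. rewrite E; ring.
  replace (a * (a * r0 + b * r) + - b * (a * r - b * r0)) with ((a * a + b * b) * r0) by ring. rewrite E; ring. Qed.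

Lemma WR m : forall g, l2 (rl m g) -> forall w, lev w = m -> Wl m (Rl m g) w = g w.
Proof.
  induction m; intros g Hg w Hw; simpl; auto.
  assert (HR : forall g A, nsq (rl m g) A -> nsq (rl m (Rl m g)) A) by apply R_norm.
  assert (HP : l2 (rl (S m) (Pm m g))). { destruct Hg as [A HA]. exists A. apply P_norm; auto. }
  fold (Pm m g). destruct excluded_middle_informative as [C|C].
  - rewrite (W_dep m _ (Rl m (fun y => g (cc y)))).
    + rewrite IHm. rewrite <- chosen_inv; auto. destruct Hg as [A HA].
      destruct (nsq_rs_sub (fun w => lev w = S m) (fun w => lev w = S m /\ chosen w) g A) as [a Ha]; auto. tauto.
      exists a. apply (nsq_cc m (fun y => g (cc y)) g a); auto. apply lev_pr; auto.
    + intros y Hy. rewrite (QQ m); auto. 2:{ rewrite lev_cc; auto. } unfold Pm. rewrite pr_cc.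
      destruct excluded_middle_informative as [_|n]; [|exfalso; apply n, chosen_cc].
      apply cph_ph.
    + apply lev_pr; auto.
  - rewrite (QQ m); auto. unfold Pm. destruct excluded_middle_informative; tauto.
Qed.


Lemma l2_rs_y m y f : lev y = m -> l2 (rl (S m) f) -> l2 (rs (fun w => par w = Some y) f).
Proof. intros Hy H. apply l2_rs_sub with (fun w => lev w = S m); auto. apply rs_y_sub; auto. Qed.

Lemma Q_add m f g : l2 (rl (S m) f) -> l2 (rl (S m) g) -> forall w, lev w = S m ->
  Qf (fun v => Cadd (f v) (g v)) w = Cadd (Qf f w) (Qf g w).
Proof.
  intros Hf Hg w Hw. destruct (lev_S w m Hw) as [y [E Hy]]. rewrite !(Qf_loc _ w y E).
  replace (rs (fun w => par w = Some y) (fun v => Cadd (f v) (g v))) with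
    (fun v => Cadd (rs (fun w => par w = Some y) f v) (rs (fun w => par w = Some y) g v)).
  apply hh_add. apply l2_vv. apply (l2_rs_y m); auto. apply (l2_rs_y m); auto.
  apply functional_extensionality; intros v. unfold rs. destruct excluded_middle_informative; auto. csimpl; f_equal; ring.
Qed.

Lemma Q_scal m f c : l2 (rl (S m) f) -> forall w, lev w = S m ->
  Qf (fun v => Cmul c (f v)) w = Cmul c (Qf f w).
Proof.
  intros Hf w Hw. destruct (lev_S w m Hw) as [y [E Hy]]. rewrite !(Qf_loc _ w y E).
  replace (rs (fun w => par w = Some y) (fun v => Cmul c (f v))) with
    (fun v => Cmul c (rs (fun w => par w = Some y) f v)).
  apply hh_scal. apply l2_vv. apply (l2_rs_y m); auto.
  apply functional_extensionality; intros v. unfold rs. destruct excluded_middle_informative; auto. destruct c; csimpl; f_equal; ring.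
Qed.

Lemma l2_hprime m f : l2 (rl (S m) f) -> l2 (rl m (fun y => Cmul (Cconj (ph y)) (Qf f (cc y)))).
Proof.
  intros [A HA]. apply Q_level in HA.
  destruct (nsq_rs_sub (fun w => lev w = S m) (fun w => lev w = S m /\ chosen w) (Qf f) A) as [a Ha]; auto. tauto.
  exists a. apply (nsq_cc m _ (Qf f)); auto. intros; rewrite Cnorm2_cphz; auto.
Qed.

Lemma l2_rl_S m f : l2 (rl (S m) f) -> l2 (rl m (fun y => f (cc y))).
Proof.
  intros [A HA].
  destruct (nsq_rs_sub (fun w => lev w = S m) (fun w => lev w = S m /\ chosen w) f A) as [a Ha]; auto. tauto.
  exists a. apply (nsq_cc m _ f); auto.
Qed.

Lemma W_add m : forall f g, l2 (rl m f) -> l2 (rl m g) -> forall w, lev w = m ->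
  Wl m (fun v => Cadd (f v) (g v)) w = Cadd (Wl m f w) (Wl m g w).
Proof.
  induction m; intros f g Hf Hg w Hw; simpl; auto.
  destruct excluded_middle_informative as [C|C].
  - rewrite (W_dep m _ (fun y => Cadd (Cmul (Cconj (ph y)) (Qf f (cc y))) (Cmul (Cconj (ph y)) (Qf g (cc y))))).
    apply IHm. apply l2_hprime; auto. apply l2_hprime; auto. apply lev_pr; auto.
    intros y Hy. rewrite (Q_add m); auto. destruct (ph y), (Qf f (cc y)), (Qf g (cc y)); csimpl; f_equal; ring.
    rewrite lev_cc; auto. apply lev_pr; auto.
  - apply (Q_add m); auto.
Qed.

Lemma W_scal m : forall f c, l2 (rl m f) -> forall w, lev w = m ->
  Wl m (fun v => Cmul c (f v)) w = Cmul c (Wl m f w).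
Proof.
  induction m; intros f c Hf w Hw; simpl; auto.
  destruct excluded_middle_informative as [C|C].
  - rewrite (W_dep m _ (fun y => Cmul c (Cmul (Cconj (ph y)) (Qf f (cc y))))).
    apply IHm. apply l2_hprime; auto. apply lev_pr; auto.
    intros y Hy. rewrite (Q_scal m); auto. destruct c, (ph y), (Qf f (cc y)); csimpl; f_equal; ring.
    rewrite lev_cc; auto. apply lev_pr; auto.
  - apply (Q_scal m); auto.
Qed.

Lemma l2_rl m f : l2 f -> l2 (rl m f).
Proof. apply l2_dom. intros w; unfold rl, rs; destruct excluded_middle_informative. lra. rewrite Cnorm2_C0; apply Cnorm2_nonneg. Qed.

Definition SS := wshift par lam.

Lemma QS m f : l2 f -> forall w, lev w = S m ->
  Qf (SS f) w = if edec w (cc (pr w)) then Cmul (f (pr w)) (Cmul (RtoC (bb m)) (ph (pr w))) else C0.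
Proof.
  intros Hf w Hw. destruct (lev_S w m Hw) as [y [E Hy]]. rewrite (Qf_loc _ w y E).
  replace (rs (fun w => par w = Some y) (SS f)) with (fun v => Cmul (f y) (lamb y v)).
  2:{ apply functional_extensionality; intros v. unfold rs, SS, wshift. destruct excluded_middle_informative as [e|n].
      rewrite e. rewrite lamb_child; auto. destruct (f y), (lam v); csimpl; f_equal; ring.
      rewrite lamb_nchild; auto. destruct (f y); csimpl; f_equal; ring. }
  rewrite hh_scal; [|apply l2_vv|apply l2_lamb]. rewrite hh_lamb. unfold pr; rewrite E. rewrite Hy.
  destruct edec; auto. destruct (f y); csimpl; f_equal; ring.
Qed.

Definition WW (f : V -> Cx) : V -> Cx := fun w => Wl (lev w) f w.
Definition MM (h : V -> Cx) : V -> Cx :=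
  fun w => if excluded_middle_informative (chosen w) then Cmul (RtoC (bb (lev (pr w)))) (h (pr w)) else C0.

Lemma W_S f : l2 f -> forall w, WW (SS f) w = MM (WW f) w.
Proof.
  intros Hf w. unfold WW, MM. destruct (lev w) as [|m] eqn:Hw.
  - apply lev_0 in Hw. subst. simpl. unfold SS, wshift. rewrite par_root.
    destruct excluded_middle_informative as [C|]; auto. unfold chosen in C; rewrite par_root in C; contradiction.
  - simpl. destruct excluded_middle_informative as [C|C].
    + rewrite (lev_pr w m Hw).
      rewrite (W_dep m _ (fun y => Cmul (RtoC (bb m)) (f y))).
      apply W_scal. apply l2_rl; auto. apply lev_pr; auto.
      intros y Hy. rewrite (QS m); auto. 2:{ rewrite lev_cc; auto. } rewrite pr_cc.
      destruct edec as [_|n]; [|exfalso; apply n; auto].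
      replace (Cmul (f y) (Cmul (RtoC (bb m)) (ph y))) with (Cmul (ph y) (Cmul (RtoC (bb m)) (f y))).
      apply cph_ph. destruct (ph y), (f y); csimpl; f_equal; ring.
      apply lev_pr; auto.
    + rewrite (QS m); auto. destruct edec as [e|]; auto. exfalso; apply C. rewrite e. apply chosen_cc.
Qed.


Lemma blk_lev (f : V -> Cx) m w : blk lev (fun w => Cnorm2 (f w)) m w = Cnorm2 (rl m f w).
Proof. unfold blk, rl, rs. destruct edec; destruct excluded_middle_informative; try congruence. rewrite Cnorm2_C0; auto. Qed.

Lemma W_nsq f A : nsq f A -> nsq (WW f) A.
Proof.
  unfold nsq. apply has_sum_transfer with lev; try (intros; apply Cnorm2_nonneg).
  intros m a Ha. apply has_sum_ext with (fun w => Cnorm2 (rl m (Wl m f) w)).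
  { intros w; rewrite blk_lev. unfold rl, rs, WW. destruct excluded_middle_informative; subst; auto. }
  apply W_norm. unfold nsq. eapply has_sum_ext; [|exact Ha]. intros; rewrite blk_lev; auto.
Qed.

Definition RR (g : V -> Cx) : V -> Cx := fun w => Rl (lev w) g w.

Lemma R_nsq g A : nsq g A -> nsq (RR g) A.
Proof.
  unfold nsq. apply has_sum_transfer with lev; try (intros; apply Cnorm2_nonneg).
  intros m a Ha. apply has_sum_ext with (fun w => Cnorm2 (rl m (Rl m g) w)).
  { intros w; rewrite blk_lev. unfold rl, rs, RR. destruct excluded_middle_informative; subst; auto. }
  apply R_norm. unfold nsq. eapply has_sum_ext; [|exact Ha]. intros; rewrite blk_lev; auto.
Qed.

Lemma WR_g g : l2 g -> forall w, WW (RR g) w = g w.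
Proof.
  intros Hg w. unfold WW. rewrite (W_dep (lev w) _ (Rl (lev w) g)); auto.
  apply WR; auto. apply l2_rl; auto. intros v Hv. unfold RR; rewrite Hv; auto.
Qed.

Lemma W_add_g f g : l2 f -> l2 g -> forall w, WW (fun v => Cadd (f v) (g v)) w = Cadd (WW f w) (WW g w).
Proof. intros Hf Hg w. unfold WW. apply W_add; auto; apply l2_rl; auto. Qed.

Lemma W_scal_g f c : l2 f -> forall w, WW (fun v => Cmul c (f v)) w = Cmul c (WW f w).
Proof. intros Hf w. unfold WW. apply W_scal; auto; apply l2_rl; auto. Qed.

Definition JJ := Jmult root par cc.

Definition bm (i : Idx JJ) : V :=
  match i with
  | inl n => Nat.iter n cc root
  | inr (existT _ kk (j, n)) => Nat.iter n cc (snd (proj1_sig j))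
  end.

Lemma lev_iter n v : lev (Nat.iter n cc v) = (n + lev v)%nat.
Proof. induction n; simpl; auto. rewrite lev_cc, IHn; auto. Qed.

Lemma root_nch : ~ chosen root.
Proof. unfold chosen; rewrite par_root; auto. Qed.

Lemma J_nch kk (j : JJ kk) : ~ chosen (snd (proj1_sig j)).
Proof.
  destruct j as [[u v] [H1 [H2 H3]]]; simpl in *. unfold chosen. rewrite H2. auto.
Qed.

Lemma iter_chosen n v : chosen (Nat.iter (S n) cc v).
Proof. simpl. apply chosen_cc. Qed.

Lemma iter_eq n m a b : ~ chosen a -> ~ chosen b -> Nat.iter n cc a = Nat.iter m cc b -> n = m /\ a = b.
Proof.
  revert m. induction n; intros m Ha Hb E; destruct m; simpl in E; auto.
  - exfalso; apply Ha; rewrite E; apply chosen_cc.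
  - exfalso; apply Hb; rewrite <- E; apply chosen_cc.
  - apply cc_inj in E. destruct (IHn m Ha Hb E); auto.
Qed.

Lemma JJ_eq kk (j j' : JJ kk) : proj1_sig j = proj1_sig j' -> j = j'.
Proof. destruct j, j'; simpl; intros; subst; f_equal; apply proof_irrelevance. Qed.

Lemma bm_inj i i' : bm i = bm i' -> i = i'.
Proof.
  destruct i as [n|[kk [j n]]], i' as [n'|[kk' [j' n']]]; simpl; intros E.
  - apply iter_eq in E; try apply root_nch. destruct E; subst; auto.
  - apply iter_eq in E; try apply root_nch; try apply J_nch. destruct E as [_ E]. exfalso.
    destruct j' as [[u v] [H1 [H2 H3]]]; simpl in *. rewrite <- E in H2. rewrite par_root in H2; discriminate.
  - apply iter_eq in E; try apply root_nch; try apply J_nch. destruct E as [_ E]. exfalso.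
    destruct j as [[u v] [H1 [H2 H3]]]; simpl in *. rewrite E in H2. rewrite par_root in H2; discriminate.
  - apply iter_eq in E; try apply J_nch. destruct E as [-> E].
    assert (F : fst (proj1_sig j) = fst (proj1_sig j')).
    { destruct j as [[u v] [H1 [H2 H3]]], j' as [[u' v'] [H1' [H2' H3']]]; simpl in *.
      rewrite <- E in H2'. rewrite H2 in H2'. inversion H2'; auto. }
    assert (kk = kk').
    { destruct j as [[u v] [H1 [H2 H3]]], j' as [[u' v'] [H1' [H2' H3']]]; simpl in *.
      rewrite <- F in H1'. eapply gen_unique; eauto. }
    subst kk'. rewrite (JJ_eq kk j j'); auto. destruct (proj1_sig j), (proj1_sig j'); simpl in *; subst; auto.
Qed.

Definition bnext (i : Idx JJ) : Idx JJ :=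
  match i with
  | inl n => inl (S n)
  | inr (existT _ kk (j, n)) => inr (existT _ kk (j, S n))
  end.

Lemma bm_next i : bm (bnext i) = cc (bm i).
Proof. destruct i as [n|[kk [j n]]]; reflexivity. Qed.

Lemma bm_surj w : exists i, bm i = w.
Proof.
  remember (lev w) as n eqn:En. revert w En. induction n; intros w En.
  - exists (inl 0%nat). simpl. symmetry; apply lev_0; auto.
  - destruct (lev_S w n (eq_sym En)) as [u [E Hu]].
    destruct (classic (w = cc u)) as [C|C].
    + destruct (IHn u (eq_sym Hu)) as [i Hi]. exists (bnext i). rewrite bm_next, Hi; auto.
    + assert (P : gen root par n (fst (u, w)) /\ par (snd (u, w)) = Some (fst (u, w)) /\ snd (u, w) <> cc (fst (u, w))).
      { simpl. split; [|split]; auto. rewrite <- Hu. apply lev_spec. }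
      exists (inr (existT _ n (exist _ (u, w) P, 0%nat))). reflexivity.
Qed.

Lemma nsq_bm (g : V -> Cx) A : nsq g A <-> nsq (fun i => g (bm i)) A.
Proof.
  unfold nsq. apply (has_sum_reindex (fun w => Cnorm2 (g w)) (fun i => Cnorm2 (g (bm i))) bm); auto.
  intros; apply bm_inj; auto.
  intros w Hw. destruct (bm_surj w) as [i Hi]. exists i; split; auto. rewrite Hi; auto.
Qed.

Definition binv (w : V) : Idx JJ := epsilon (inhabits (inl 0%nat)) (fun i => bm i = w).
Lemma bm_binv w : bm (binv w) = w.
Proof. unfold binv. apply epsilon_spec. apply bm_surj. Qed.
Lemma binv_bm i : binv (bm i) = i.
Proof. apply bm_inj. apply bm_binv. Qed.


Lemma U_intertw f : l2 f -> forall b, WW (SS f) (bm b) = model_op x JJ (fun i => WW f (bm i)) b.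
Proof.
  intros Hf b. rewrite W_S; auto. unfold MM.
  destruct b as [n|[kk [j n]]]; simpl.
  - destruct n as [|n]; simpl.
    + destruct excluded_middle_informative as [C|]; auto. exfalso; apply root_nch; auto.
    + destruct excluded_middle_informative as [C|C]; [|exfalso; apply C, chosen_cc].
      rewrite pr_cc, lev_iter, lev_root. rewrite Nat.add_0_r. reflexivity.
  - destruct n as [|n]; simpl.
    + destruct excluded_middle_informative as [C|]; auto. exfalso; apply (J_nch kk j); auto.
    + destruct excluded_middle_informative as [C|C]; [|exfalso; apply C, chosen_cc].
      rewrite pr_cc, lev_iter. rewrite xi_semi.
      destruct j as [[u v] [H1 [H2 H3]]]; simpl. rewrite (lev_child v u H2), (lev_eq kk u H1). reflexivity.
Qed.

Lemma unit_eq : unitarily_equiv (wshift par lam) (model_op x JJ).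
Proof.
  exists (fun f i => WW f (bm i)). split; [|split; [|split; [|split; [|split]]]].
  - intros f [A HA]. exists A. apply nsq_bm. apply W_nsq; auto.
  - intros f g Hf Hg b. apply W_add_g; auto.
  - intros z f Hf b. apply W_scal_g; auto.
  - intros f s [A HA]. split.
    + intros Hs. rewrite (nsq_unique f s A Hs HA). apply nsq_bm. apply W_nsq; auto.
    + intros Hs. assert (nsq (fun i => WW f (bm i)) A) by (apply nsq_bm; apply W_nsq; auto).
      rewrite (nsq_unique _ s A Hs H). auto.
  - intros g [A HA]. set (g' := fun w => g (binv w)).
    assert (Hg' : nsq g' A). { apply nsq_bm. eapply nsq_ext; [|exact HA]. intros; unfold g'; rewrite binv_bm; auto. }
    exists (RR g'). split. exists A; apply R_nsq; auto.
    intros b. rewrite WR_g. unfold g'; rewrite binv_bm; auto. exists A; auto.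
  - intros f Hf b. apply U_intertw; auto.
Qed.

Fixpoint pos {I : Type} (l : list I) (i : I) : nat :=
  match l with [] => 0%nat | a :: l' => if edec a i then 0%nat else S (pos l' i) end.

Lemma pos_spec {I : Type} (l : list I) i : In i l -> nth_error l (pos l i) = Some i.
Proof. induction l; simpl; intros H; [contradiction|]. destruct edec; subst; auto. destruct H; [congruence|]. auto. Qed.

Lemma max_nat (P : nat -> Prop) K : P 0%nat -> (forall k, P k -> (k <= K)%nat) -> exists k, P k /\ forall k', P k' -> (k' <= k)%nat.
Proof.
  revert P. induction K; intros P H0 HK.
  - exists 0%nat; split; [auto|intros k' Hk'; apply HK; auto].
  - destruct (classic (P (S K))) as [HS|HS]. exists (S K); split; auto.
    apply IHK; auto. intros k Hk. specialize (HK k Hk). destruct (Nat.eq_dec k (S K)); [subst; contradiction|lia].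
Qed.

Lemma fsum_len {I : Type} (a : I -> R) e l : (forall i, In i l -> e <= a i) -> INR (length l) * e <= fsum a l.
Proof.
  induction l; intros H; cbn [length]. rewrite fsum_nil; simpl; lra. rewrite fsum_cons. rewrite S_INR.
  assert (e <= a a0) by (apply H; left; auto). assert (INR (length l) * e <= fsum a l) by (apply IHl; intros; apply H; right; auto). lra.
Qed.

Lemma count_support {I : Type} (a : I -> R) Ssum : (forall i, 0 <= a i) -> has_sum a Ssum ->
  exists phi : I -> nat, forall i j, 0 < a i -> 0 < a j -> phi i = phi j -> i = j.
Proof.
  intros Ha HS.
  assert (Hcov : forall n, exists L, forall i, / INR (S n) < a i -> In i L).
  { intros n. set (good := fun l => NoDup l /\ forall i, In i l -> / INR (S n) < a i).
    destruct (INR_unbounded (Ssum * INR (S n))) as [K HK].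
    assert (Hpos : 0 < INR (S n)) by (apply lt_0_INR; lia).
    destruct (max_nat (fun k => exists l, good l /\ length l = k) K) as [k [[L [[HL1 HL2] HLk]] Hmax]].
    - exists []; split; auto. split; [constructor|intros; contradiction].
    - intros k [l [[Hl1 Hl2] <-]]. apply INR_le. apply Rlt_le.
      apply Rle_lt_trans with (Ssum * INR (S n)); auto.
      pose proof (has_sum_ub a Ssum l HS Hl1). pose proof (fsum_len a (/ INR (S n)) l) as Hf.
      assert (INR (length l) * / INR (S n) <= Ssum). { apply Rle_trans with (fsum a l); auto. apply Hf. intros; left; auto. }
      apply (Rmult_le_compat_r (INR (S n))) in H0; [|lra]. field_simplify in H0; lra.
    - exists L. intros i Hi. apply NNPP; intro Hn. specialize (Hmax (S k)).
      assert (S k <= k)%nat; [|lia]. apply Hmax. exists (i :: L). split; [split|].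
      constructor; auto. intros i' [<-|Hi']; auto. simpl; auto. }
  assert (Hn : forall i, 0 < a i -> exists n, / INR (S n) < a i).
  { intros i Hi. destruct (INR_unbounded (/ a i)) as [n Hn]. exists n. rewrite S_INR.
    assert (H1 : a i * / a i < a i * INR n) by (apply Rmult_lt_compat_l; auto).
    rewrite Rinv_r in H1; [|lra]. pose proof (pos_INR n).
    apply (Rmult_lt_reg_r (INR n + 1)); [lra|]. rewrite Rinv_l; [|lra]. nra. }
  set (Ln := fun n => epsilon (inhabits []) (fun L => forall i, / INR (S n) < a i -> In i L)).
  assert (HLn : forall n i, / INR (S n) < a i -> In i (Ln n)). { intros n. apply (epsilon_spec (inhabits []) (fun L => forall i, / INR (S n) < a i -> In i L)). apply Hcov. }
  set (ni := fun i => epsilon (inhabits 0%nat) (fun n => / INR (S n) < a i)).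
  assert (Hni : forall i, 0 < a i -> / INR (S (ni i)) < a i). { intros i Hi. apply (epsilon_spec (inhabits 0%nat) (fun n => / INR (S n) < a i)). apply Hn; auto. }
  exists (fun i => Cantor.to_nat (ni i, pos (Ln (ni i)) i)).
  intros i j Hi Hj E. apply Cantor.to_nat_inj in E. inversion E as [[E1 E2]].
  pose proof (pos_spec (Ln (ni i)) i (HLn _ _ (Hni i Hi))) as P1.
  pose proof (pos_spec (Ln (ni j)) j (HLn _ _ (Hni j Hj))) as P2.
  rewrite <- E1 in P2. rewrite <- E2 in P2. rewrite P1 in P2. inversion P2; auto.
Qed.


Lemma child_count (Hnz : forall v, v <> root -> lam v <> C0) u :
  exists h : V -> nat, forall v v', par v = Some u -> par v' = Some u -> h v = h v' -> v = v'.
Proof.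
  destruct (count_support (fun v => Cnorm2 (lamb u v)) (Nv u)) as [phi Hphi].
  intros; apply Cnorm2_nonneg. apply nsq_lamb.
  exists phi. intros v v' E E' Hv. apply Hphi; auto.
  - rewrite lamb_child; auto. destruct (Cnorm2_nonneg (lam v)); auto. exfalso. symmetry in H. apply Cnorm2_zero in H.
    apply (Hnz v); auto. intro; subst. rewrite par_root in E; discriminate.
  - rewrite lamb_child; auto. destruct (Cnorm2_nonneg (lam v')); auto. exfalso. symmetry in H. apply Cnorm2_zero in H.
    apply (Hnz v'); auto. intro; subst. rewrite par_root in E'; discriminate.
Qed.

Definition hf (u : V) : V -> nat := epsilon (inhabits (fun _ : V => 0%nat))
  (fun h => forall v v', par v = Some u -> par v' = Some u -> h v = h v' -> v = v').

Lemma hf_spec (Hnz : forall v, v <> root -> lam v <> C0) u v v' : par v = Some u -> par v' = Some u -> hf u v = hf u v' -> v = v'.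
Proof. unfold hf. apply (epsilon_spec (inhabits (fun _ : V => 0%nat)) (fun h => forall v v', par v = Some u -> par v' = Some u -> h v = h v' -> v = v')). apply child_count; auto. Qed.

Lemma level_count (Hnz : forall v, v <> root -> lam v <> C0) kk :
  exists g : V -> nat, forall u v, lev u = kk -> lev v = kk -> g u = g v -> u = v.
Proof.
  induction kk.
  - exists (fun _ => 0%nat). intros u v Hu Hv _. apply lev_0 in Hu; apply lev_0 in Hv; subst; auto.
  - destruct IHkk as [g Hg]. exists (fun w => Cantor.to_nat (g (pr w), hf (pr w) w)).
    intros u v Hu Hv E. apply Cantor.to_nat_inj in E. inversion E as [[E1 E2]].
    destruct (lev_S u kk Hu) as [pu [Pu Lu]]. destruct (lev_S v kk Hv) as [pv [Pv Lv]].
    assert (pr u = pu) by (unfold pr; rewrite Pu; auto). assert (pr v = pv) by (unfold pr; rewrite Pv; auto).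
    subst pu pv. assert (pr u = pr v) by (apply Hg; auto). rewrite H in E2, Pu.
    apply (hf_spec Hnz (pr v)); auto.
Qed.

Lemma J_count (Hnz : forall v, v <> root -> lam v <> C0) kk :
  exists h : JJ kk -> nat, forall a b, h a = h b -> a = b.
Proof.
  destruct (level_count Hnz kk) as [g Hg].
  exists (fun j => Cantor.to_nat (g (fst (proj1_sig j)), hf (fst (proj1_sig j)) (snd (proj1_sig j)))).
  intros a b E. apply Cantor.to_nat_inj in E. inversion E as [[E1 E2]]. apply JJ_eq.
  destruct a as [[u v] [H1 [H2 H3]]], b as [[u' v'] [H1' [H2' H3']]]; simpl in *.
  assert (u = u'). { apply Hg; auto; apply lev_eq; auto. } subst u'. f_equal.
  apply (hf_spec Hnz u); auto.
Qed.

Lemma main_sec : leafless par /\ exists c : V -> V,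
    (forall u, par (c u) = Some u) /\
    unitarily_equiv (wshift par lam) (model_op x (Jmult root par c)) /\
    ((forall v, v <> root -> lam v <> C0) ->
       forall kk, exists h : Jmult root par c kk -> nat, forall a b, h a = h b -> a = b).
Proof.
  split. intros u. exists (cc u). apply cc_par.
  exists cc. split; [apply cc_par|]. split. apply unit_eq.
  intros Hnz kk. apply J_count; auto.
Qed.

End Tree.

Theorem mainTheorem15 (V : Type) (root : V) (par : V -> option V)
  (lam : V -> Cx) (alpha : V -> R) (x : R) :
  is_rooted_tree root par ->
  bounded_op (wshift par lam) ->
  two_isometry (wshift par lam) ->
  (forall v, 0 <= alpha v) ->
  (forall u p, par u = Some p -> nsq (wshift par lam (e_ u)) (alpha p ^ 2)) ->
  0 <= x -> nsq (wshift par lam (e_ root)) (x ^ 2) ->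
  leafless par /\
  exists c : V -> V,
    (forall u, par (c u) = Some u) /\
    unitarily_equiv (wshift par lam) (model_op x (Jmult root par c)) /\
    ((forall v, v <> root -> lam v <> C0) ->
       forall kk, exists h : Jmult root par c kk -> nat, forall a b, h a = h b -> a = b).
Proof.
  intros. eapply main_sec; eauto.
Qed.
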